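(* Let $N\ge1$. For $\alpha\in(-1,1)$ let $\lambda^{(N)}_0(\alpha)<\lambda^{(N)}_1(\alpha)<\dots<\lambda^{(N)}_N(\alpha)$ be the zeros of $\tilde\phi_{N+1}$ (equivalently the eigenvalues of $\tilde{\mathbf M}$). Then: (1) for each $k=0,\dots,N$, $\dfrac{\partial\lambda^{(N)}_k}{\partial\alpha}(\alpha)<0$ for all $\alpha\in(-1,1)$; (2) $\lambda^{(N)}_k<\lambda^{(N-1)}_k<\lambda^{(N)}_{k+1}$ for $k=0,\dots,N-1$ (where $\lambda^{(N-1)}_k$ are the zeros of $\tilde\phi_N$); (3) $\lambda^{(N)}_0<\dfrac{\int_{-1}^1\mu\,\omega\,d\mu}{\int_{-1}^1\omega\,d\mu}<\lambda^{(N)}_N$; in particular $\lambda^{(N)}_0<E_1/E_0<\lambda^{(N)}_N$ for the ansatz moments described below.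
   Context: For a parameter $\alpha\in(-1,1)$ define on $[-1,1]$ the weights $\omega(\mu)=(1+\alpha\mu)^{-4}$ and $\tilde\omega(\mu)=(1+\alpha\mu)^{-5}$. Let $\{\phi_k\}_{k\ge0}$ (resp. $\{\tilde\phi_k\}_{k\ge0}$) be the monic orthogonal polynomials on $[-1,1]$ with respect to $\omega$ (resp. $\tilde\omega$); their coefficients depend smoothly on $\alpha$. Let $\tilde K_{k,k}=\int_{-1}^1\tilde\phi_k^2\tilde\omega\,d\mu$, $\tilde{\boldsymbol\Lambda}=\mathrm{diag}(\tilde K_{0,0},\dots,\tilde K_{N,N})$ and $\tilde{\mathbf M}=\tilde{\boldsymbol\Lambda}^{-1}\mathbf G$ with $G_{i,j}=\int_{-1}^1\mu\,\tilde\phi_i\tilde\phi_j\,\tilde\omega\,d\mu$, $0\le i,j\le N$. The ansatz is $\hat I(\mu)=\sum_{i=0}^N f_i\,\omega(\mu)\phi_i(\mu)$ with $f_0\neq0$ and $f_1=0$, and its moments are $E_k=\int_{-1}^1\mu^k\hat I\,d\mu$; for such an ansatz $E_1/E_0=\int_{-1}^1\mu\,\omega\,d\mu\big/\int_{-1}^1\omega\,d\mu$. *)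

(* Defs.v *)
From Stdlib Require Import Reals Lra Lia.
Open Scope R_scope.

Definition omega (a mu : R) : R := / (1 + a * mu) ^ 4.
Definition omegat (a mu : R) : R := / (1 + a * mu) ^ 5.

(* "the Riemann integral of f over [lo,hi] exists and equals l"
   (RiemannInt does not depend on the integrability proof). *)
Definition RInt_eq (f : R -> R) (lo hi l : R) : Prop :=
  exists pr : Riemann_integrable f lo hi, RiemannInt pr = l.

Fixpoint psum (c : nat -> R) (n : nat) (x : R) : R :=
  match n with
  | O => 0
  | S m => psum c m x + c m * x ^ m
  end.

Definition monic_poly (n : nat) (p : R -> R) : Prop :=
  exists c : nat -> R, forall x, p x = x ^ n + psum c n x.

Definition monic_orth_poly (wt : R -> R) (n : nat) (p : R -> R) : Prop :=
  monic_poly n p /\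
  forall j : nat, (j < n)%nat ->
    RInt_eq (fun mu => p mu * mu ^ j * wt mu) (-1) 1 0.

Definition sorted_zeros (p : R -> R) (n : nat) (z : nat -> R) : Prop :=
  (forall k : nat, (k < n)%nat -> z k < z (S k)) /\
  (forall k : nat, (k <= n)%nat -> p (z k) = 0) /\
  (forall x : R, p x = 0 -> exists k : nat, (k <= n)%nat /\ x = z k).

(* Main.v *)
Require Import Defs.
From Stdlib Require Import Reals Lra Lia Psatz ClassicalEpsilon.
From Coquelicot Require Import Coquelicot.
Open Scope R_scope.

Definition pol (n : nat) (f : R -> R) : Prop := exists c : nat -> R, forall x, f x = psum c n x.

Lemma psum_ext c d n x : (forall i, (i < n)%nat -> c i = d i) -> psum c n x = psum d n x.
Proof.
  induction n; simpl; intros H; auto.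
  rewrite IHn by (intros; apply H; lia). rewrite H by lia. reflexivity.
Qed.

Lemma psum_plus c d n x : psum (fun i => c i + d i) n x = psum c n x + psum d n x.
Proof. induction n; simpl; [lra|]. rewrite IHn. ring. Qed.

Lemma psum_scal k c n x : psum (fun i => k * c i) n x = k * psum c n x.
Proof. induction n; simpl; [lra|]. rewrite IHn. ring. Qed.

Lemma psum_shift c n x : psum c (S n) x = c O + x * psum (fun i => c (S i)) n x.
Proof.
  induction n; simpl; [ring|].
  simpl in IHn. rewrite IHn. ring.
Qed.

Lemma pol_ext n f g : (forall x, f x = g x) -> pol n f -> pol n g.
Proof. intros H [c Hc]; exists c; intros x; rewrite <- H; auto. Qed.

Lemma pol_plus n f g : pol n f -> pol n g -> pol n (fun x => f x + g x).
Proof. intros [c Hc] [d Hd]; exists (fun i => c i + d i); intros x; rewrite psum_plus, Hc, Hd; auto. Qed.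

Lemma pol_scal n k f : pol n f -> pol n (fun x => k * f x).
Proof. intros [c Hc]; exists (fun i => k * c i); intros x; rewrite psum_scal, Hc; auto. Qed.

Lemma pol_opp n f : pol n f -> pol n (fun x => - f x).
Proof. intros H; apply (pol_ext n (fun x => (-1) * f x)); [intros; ring|apply pol_scal; auto]. Qed.

Lemma pol_minus n f g : pol n f -> pol n g -> pol n (fun x => f x - g x).
Proof. intros H1 H2; apply (pol_ext n (fun x => f x + - g x)); [intros; ring|]. apply pol_plus; auto; apply pol_opp; auto. Qed.

Lemma pol_zero n : pol n (fun _ => 0).
Proof. exists (fun _ => 0). intros x. induction n; simpl; [lra|]. rewrite <- IHn; ring. Qed.

Lemma pol_S n f : pol n f -> pol (S n) f.
Proof.
  intros [c Hc]. exists (fun i => if (i <? n)%nat then c i else 0). intros x. simpl.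
  rewrite Nat.ltb_irrefl. rewrite Hc. rewrite (psum_ext (fun i => if (i <? n)%nat then c i else 0) c). ring.
  intros i Hi. apply Nat.ltb_lt in Hi. rewrite Hi. auto.
Qed.

Lemma pol_le m n f : (m <= n)%nat -> pol m f -> pol n f.
Proof. induction 1; auto. intros; apply pol_S; auto. Qed.

Lemma pol_xmul n f : pol n f -> pol (S n) (fun x => x * f x).
Proof.
  intros [c Hc]. exists (fun i => match i with O => 0 | S j => c j end). intros x.
  rewrite psum_shift. cbv beta iota. rewrite Hc. change (psum (fun i => c i) n x) with (psum c n x). ring.
Qed.

Lemma pol_mon n k : pol (S n) (fun x => k * x ^ n).
Proof.
  destruct (pol_zero n) as [c Hc].
  exists (fun i => if (i <? n)%nat then c i else k). intros x. simpl.
  rewrite Nat.ltb_irrefl. rewrite (psum_ext (fun i => if (i <? n)%nat then c i else k) c). rewrite <- Hc. ring.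
  intros i Hi. apply Nat.ltb_lt in Hi. rewrite Hi. auto.
Qed.

Lemma pol_const n k : pol (S n) (fun _ => k).
Proof.
  apply (pol_le 1); [lia|]. apply (pol_ext 1 (fun x => k * x ^ 0)); [intros; simpl; ring|]. apply pol_mon.
Qed.

Lemma monic_pol n f : monic_poly n f -> pol (S n) f.
Proof.
  intros [c Hc]. apply (pol_ext (S n) (fun x => 1 * x ^ n + psum c n x)); [intros; rewrite Hc; ring|].
  apply pol_plus. apply pol_mon. apply pol_S. exists c; auto.
Qed.

Lemma monic_iff n f : monic_poly n f <-> exists p, pol n p /\ forall x, f x = x ^ n + p x.
Proof.
  split. intros [c Hc]. exists (psum c n). split; [exists c; auto|auto].
  intros [p [[c Hc] H]]. exists c. intros x. rewrite H, Hc; auto.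
Qed.

Lemma pol_0_zero f : pol 0 f -> forall x, f x = 0.
Proof. intros [c Hc] x. rewrite Hc. reflexivity. Qed.

Lemma pol_factor n f r : pol (S n) f -> f r = 0 ->
  exists g, pol n g /\ forall x, f x = (x - r) * g x.
Proof.
  revert f. induction n; intros f [c Hc] Hr.
  - exists (fun _ => 0). split. apply pol_zero. intros x.
    rewrite Hc. rewrite Hc in Hr. simpl in *. lra.
  - set (h := psum (fun i => c (S i)) (S n)).
    assert (Hf : forall x, f x = c O + x * h x) by (intros; rewrite Hc, psum_shift; auto).
    assert (Hh : pol (S n) h) by (exists (fun i => c (S i)); auto).
    destruct (IHn (fun x => h x - h r)) as [k [Hk Hk2]].
    apply pol_minus; auto. apply pol_const. lra.
    exists (fun x => h x + r * k x). split.
    apply pol_plus; auto. apply pol_scal. apply pol_S; auto.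
    intros x. rewrite Hf. rewrite Hf in Hr.
    assert (E := Hk2 x). simpl in E.
    replace (c O) with (- r * h r) by lra.
    transitivity ((x - r) * h x + r * (h x - h r)); [ring|]. rewrite E; ring.
Qed.

Lemma xpow_factor n r : exists s, monic_poly n s /\
  forall x, x ^ (S n) - r ^ (S n) = (x - r) * s x.
Proof.
  induction n.
  - exists (fun _ => 1). split. exists (fun _ => 0). intros; simpl; ring. intros; simpl; ring.
  - destruct IHn as [s [Hs E]]. apply monic_iff in Hs. destruct Hs as [p [Hp Hsp]].
    exists (fun x => x * s x + r ^ (S n)). split.
    + apply monic_iff. exists (fun x => x * p x + r ^ S n). split.
      apply pol_plus. apply pol_xmul; auto. apply pol_const.
      intros x. rewrite Hsp. simpl. ring.
    + intros x. transitivity (x * (x ^ S n - r ^ S n) + r ^ S n * (x - r)); [simpl; ring|].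
      rewrite E. ring.
Qed.

Lemma monic_factor n f r : monic_poly (S n) f -> f r = 0 ->
  exists g, monic_poly n g /\ forall x, f x = (x - r) * g x.
Proof.
  intros Hf Hr. apply monic_iff in Hf. destruct Hf as [p [Hp Hfp]].
  destruct (xpow_factor n r) as [s [Hs Es]].
  destruct (pol_factor n (fun x => p x - p r) r) as [k [Hk Ek]].
  apply pol_minus; auto. apply pol_const. lra.
  apply monic_iff in Hs. destruct Hs as [q [Hq Hsq]].
  exists (fun x => s x + k x). split.
  - apply monic_iff. exists (fun x => q x + k x). split. apply pol_plus; auto.
    intros; rewrite Hsq; ring.
  - intros x. rewrite Hfp. rewrite Hfp in Hr.
    transitivity ((x ^ S n - r ^ S n) + (p x - p r)); [lra|].
    rewrite Es, Ek. ring.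
Qed.

Lemma pol_roots n f (z : nat -> R) : pol n f ->
  (forall i j, (i < n)%nat -> (j < n)%nat -> i <> j -> z i <> z j) ->
  (forall i, (i < n)%nat -> f (z i) = 0) -> forall x, f x = 0.
Proof.
  revert f. induction n; intros f Hf Hz H0.
  - apply pol_0_zero; auto.
  - destruct (pol_factor n f (z n)) as [g [Hg Eg]]; auto.
    assert (G : forall x, g x = 0).
    { apply IHn; [exact Hg| intros i j Hi Hj Hij; apply Hz; auto; lia|].
      intros i Hi. assert (Hzi := H0 i ltac:(lia)). rewrite Eg in Hzi.
      assert (z i - z n <> 0). { assert (z i <> z n) by (apply Hz; lia). lra. }
      apply Rmult_integral in Hzi. destruct Hzi; auto. contradiction. }
    intros x. rewrite Eg, G. ring.
Qed.

Fixpoint prd (n : nat) (F : nat -> R) : R :=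
  match n with O => 1 | S m => prd m F * F m end.

Lemma prd_ext n F G : (forall i, (i < n)%nat -> F i = G i) -> prd n F = prd n G.
Proof. induction n; simpl; intros H; auto. rewrite IHn by (intros; apply H; lia). rewrite H by lia; auto. Qed.

Lemma prd_mult n F G : prd n (fun i => F i * G i) = prd n F * prd n G.
Proof. induction n; simpl; [ring|]. rewrite IHn; ring. Qed.

Lemma prd_pos n F : (forall i, (i < n)%nat -> 0 < F i) -> 0 < prd n F.
Proof. induction n; simpl; intros H; [lra|]. apply Rmult_lt_0_compat; [apply IHn; intros; apply H; lia| apply H; lia]. Qed.

Lemma prd_neq0 n F : (forall i, (i < n)%nat -> F i <> 0) -> prd n F <> 0.
Proof. induction n; simpl; intros H; [lra|]. apply Rmult_integral_contrapositive_currified; [apply IHn; intros; apply H; lia| apply H; lia]. Qed.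

Lemma prd_neg n F j : (j < n)%nat -> F j < 0 -> (forall i, (i < n)%nat -> i <> j -> 0 < F i) -> prd n F < 0.
Proof.
  induction n; intros Hj Fj H; [lia|]. simpl.
  destruct (Nat.eq_dec j n) as [->|Hne].
  - assert (0 < prd n F) by (apply prd_pos; intros; apply H; lia). nra.
  - assert (prd n F < 0) by (apply IHn; auto; try lia; intros; apply H; lia).
    assert (0 < F n) by (apply H; lia). nra.
Qed.

Lemma monic_prod n f (z : nat -> R) : monic_poly n f ->
  (forall i j, (i < n)%nat -> (j < n)%nat -> i <> j -> z i <> z j) ->
  (forall i, (i < n)%nat -> f (z i) = 0) -> forall x, f x = prd n (fun i => x - z i).
Proof.
  revert f. induction n; intros f Hf Hz H0.
  - destruct Hf as [c Hc]. intros x; rewrite Hc; simpl; ring.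
  - destruct (monic_factor n f (z n)) as [g [Hg Eg]]; auto.
    assert (G : forall x, g x = prd n (fun i => x - z i)).
    { apply IHn; [exact Hg| intros i j Hi Hj Hij; apply Hz; auto; lia|].
      intros i Hi. assert (Hzi := H0 i ltac:(lia)). rewrite Eg in Hzi.
      assert (z i - z n <> 0). { assert (z i <> z n) by (apply Hz; lia). lra. }
      apply Rmult_integral in Hzi. destruct Hzi; auto. contradiction. }
    intros x. rewrite Eg, G. simpl. ring.
Qed.

Lemma monic_nonzero n f : monic_poly n f -> exists x, -1 < x < 1 /\ f x <> 0.
Proof.
  intros Hf.
  set (z := fun i : nat => INR i / INR (S n)).
  assert (HS : 0 < INR (S n)) by (apply lt_0_INR; lia).
  assert (Hzr : forall i, (i <= n)%nat -> -1 < z i < 1).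
  { intros i Hi. unfold z. assert (0 <= INR i) by apply pos_INR.
    assert (INR i < INR (S n)) by (apply lt_INR; lia). split.
    apply Rlt_le_trans with 0; [lra|]. apply Rmult_le_pos; auto. left; apply Rinv_0_lt_compat; auto.
    apply Rmult_lt_reg_r with (INR (S n)); auto. unfold Rdiv. rewrite Rmult_assoc, Rinv_l; lra. }
  assert (Hzi : forall i j, i <> j -> z i <> z j).
  { intros i j Hij E. unfold z in E. apply Hij. apply INR_eq.
    apply Rmult_eq_reg_r with (/ INR (S n)). exact E. apply Rinv_neq_0_compat; lra. }
  destruct (Classical_Prop.classic (exists i, (i <= n)%nat /\ f (z i) <> 0)) as [[i [Hi Hf0]]|Hno].
  - exists (z i); split; auto.
  - exfalso.
    assert (Hall : forall i, (i <= n)%nat -> f (z i) = 0).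
    { intros i Hi. destruct (Req_dec (f (z i)) 0); auto. exfalso; apply Hno; exists i; auto. }
    assert (E := monic_prod n f z Hf ltac:(intros; apply Hzi; auto) ltac:(intros; apply Hall; lia) (z n)).
    rewrite Hall in E by lia. symmetry in E. revert E. apply prd_neq0.
    intros i Hi. assert (z n <> z i) by (apply Hzi; lia). lra.
Qed.

Lemma pol_pow n : pol (S n) (fun x => x ^ n).
Proof. apply (pol_ext _ (fun x => 1 * x ^ n)); [intros; ring|apply pol_mon]. Qed.

Lemma ct_plus (f g : R -> R) (x : R) : continuous f x -> continuous g x -> continuous (fun y => f y + g y) x.
Proof. intros; exact (continuous_plus f g x H H0). Qed.
Lemma ct_mult (f g : R -> R) (x : R) : continuous f x -> continuous g x -> continuous (fun y => f y * g y) x.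
Proof. intros; exact (continuous_mult f g x H H0). Qed.
Lemma ct_const (c x : R) : continuous (fun _ => c) x.
Proof. apply continuous_const. Qed.
Lemma ct_id (x : R) : continuous (fun y => y) x.
Proof. apply continuous_id. Qed.
Lemma ct_pow n (x : R) : continuous (fun y => y ^ n) x.
Proof.
  induction n; simpl. apply ct_const. apply ct_mult; auto. apply ct_id.
Qed.
Lemma ct_psum c n (x : R) : continuous (psum c n) x.
Proof.
  induction n; simpl. apply ct_const.
  apply (ct_plus (psum c n) (fun y => c n * y ^ n)); auto. apply ct_mult. apply ct_const. apply ct_pow.
Qed.
Lemma ct_pol n (f : R -> R) (x : R) : pol n f -> continuous f x.
Proof. intros [c Hc]. apply (continuous_ext (psum c n)). intros; rewrite Hc; auto. apply ct_psum. Qed.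
Lemma ct_inv (f : R -> R) (x : R) : continuous f x -> f x <> 0 -> continuous (fun y => / f y) x.
Proof. intros; apply continuous_Rinv_comp; auto. Qed.
Lemma ct_ext (f g : R -> R) (x : R) : (forall y, f y = g y) -> continuous f x -> continuous g x.
Proof. intros; eapply continuous_ext; eauto. Qed.

Definition Cn (f : R -> R) := forall x, -1 <= x <= 1 -> continuous f x.

Lemma Cn_plus f g : Cn f -> Cn g -> Cn (fun y => f y + g y).
Proof. intros H1 H2 x Hx; apply ct_plus; auto. Qed.
Lemma Cn_mult f g : Cn f -> Cn g -> Cn (fun y => f y * g y).
Proof. intros H1 H2 x Hx; apply ct_mult; auto. Qed.
Lemma Cn_const c : Cn (fun _ => c).
Proof. intros x _; apply ct_const. Qed.
Lemma Cn_id : Cn (fun y => y).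
Proof. intros x _; apply ct_id. Qed.
Lemma Cn_pol n f : pol n f -> Cn f.
Proof. intros H x _; eapply ct_pol; eauto. Qed.
Lemma Cn_ext f g : (forall y, f y = g y) -> Cn f -> Cn g.
Proof. intros E H x Hx; eapply ct_ext; eauto. Qed.
Lemma Cn_scal k f : Cn f -> Cn (fun y => k * f y).
Proof. intros; apply Cn_mult; auto; apply Cn_const. Qed.
Lemma Cn_minus f g : Cn f -> Cn g -> Cn (fun y => f y - g y).
Proof. intros. apply (Cn_ext (fun y => f y + (-1) * g y)). intros; ring. apply Cn_plus; auto. apply Cn_scal; auto. Qed.

Definition I (f : R -> R) : R := RInt f (-1) 1.

Lemma Cn_ex f : Cn f -> ex_RInt f (-1) 1.
Proof.
  intros H. apply (ex_RInt_continuous (V:=R_CompleteNormedModule)). intros z Hz. apply H.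
  rewrite Rmin_left, Rmax_right in Hz by lra. auto.
Qed.

Lemma I_ext f g : (forall x, -1 <= x <= 1 -> f x = g x) -> I f = I g.
Proof. intros H. unfold I. apply RInt_ext. intros x Hx. rewrite Rmin_left, Rmax_right in Hx by lra. apply H; lra. Qed.

Lemma I_plus f g : Cn f -> Cn g -> I (fun x => f x + g x) = I f + I g.
Proof. intros H1 H2. unfold I. exact (RInt_plus f g (-1) 1 (Cn_ex f H1) (Cn_ex g H2)). Qed.

Lemma I_scal k f : Cn f -> I (fun x => k * f x) = k * I f.
Proof. intros H1. unfold I. exact (RInt_scal f (-1) 1 k (Cn_ex f H1)). Qed.

Lemma I_minus f g : Cn f -> Cn g -> I (fun x => f x - g x) = I f - I g.
Proof. intros H1 H2. unfold I. exact (RInt_minus f g (-1) 1 (Cn_ex f H1) (Cn_ex g H2)). Qed.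

Lemma I_zero : I (fun _ => 0) = 0.
Proof. unfold I. rewrite RInt_const. unfold scal; simpl. unfold mult; simpl. ring. Qed.

Lemma I_eq f l : RInt_eq f (-1) 1 l -> I f = l.
Proof. intros [pr Hpr]. unfold I. rewrite (RInt_Reals f (-1) 1 pr). auto. Qed.

Lemma Cn_sum (F : nat -> R -> R) n : (forall i, (i <= n)%nat -> Cn (F i)) ->
  Cn (fun x => sum_f_R0 (fun i => F i x) n).
Proof.
  induction n; intros H.
  apply (Cn_ext (F 0%nat)); [intros; reflexivity | apply H; lia].
  apply (Cn_ext (fun x => sum_f_R0 (fun i => F i x) n + F (S n) x)). intros; reflexivity.
  apply Cn_plus. apply IHn. intros; apply H; lia. apply H; lia.
Qed.

Lemma I_sum (F : nat -> R -> R) n : (forall i, (i <= n)%nat -> Cn (F i)) ->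
  I (fun x => sum_f_R0 (fun i => F i x) n) = sum_f_R0 (fun i => I (F i)) n.
Proof.
  induction n; intros H. simpl. apply I_ext; intros; reflexivity.
  rewrite (I_ext _ (fun x => sum_f_R0 (fun i => F i x) n + F (S n) x)) by reflexivity.
  simpl sum_f_R0 at 2. rewrite I_plus. rewrite IHn. reflexivity. intros; apply H; lia.
  apply Cn_sum; intros; apply H; lia. apply H; lia.
Qed.

Lemma I_bound f M : Cn f -> (forall x, -1 <= x <= 1 -> Rabs (f x) <= M) -> Rabs (I f) <= 2 * M.
Proof.
  intros H HM. unfold I.
  assert (K := norm_RInt_le_const f (-1) 1 (RInt f (-1) 1) M ltac:(lra) HM (RInt_correct _ _ _ (Cn_ex f H))).
  replace (1 - -1) with 2 in K by ring. exact K.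
Qed.

Lemma I_ge0 f : Cn f -> (forall x, -1 <= x <= 1 -> 0 <= f x) -> 0 <= I f.
Proof. intros H H0. unfold I. apply RInt_ge_0. lra. apply Cn_ex; auto. intros; apply H0; lra. Qed.

Lemma I_pos f x0 : Cn f -> (forall x, -1 <= x <= 1 -> 0 <= f x) -> -1 < x0 < 1 -> 0 < f x0 -> 0 < I f.
Proof.
  intros H H0 Hx0 Hf0.
  assert (Hc := H x0 ltac:(lra)).
  apply (proj2 (continuity_pt_filterlim f x0)) in Hc.
  destruct (Hc (f x0 / 2) ltac:(lra)) as [d [Hd Hdd]].
  set (e := Rmin (d / 2) (Rmin ((x0 + 1) / 2) ((1 - x0) / 2))).
  assert (He : 0 < e). { unfold e. repeat apply Rmin_pos; lra. }
  assert (He1 : e <= d / 2) by apply Rmin_l.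
  assert (He2 : e <= (x0 + 1) / 2) by (eapply Rle_trans; [apply Rmin_r|apply Rmin_l]).
  assert (He3 : e <= (1 - x0) / 2) by (eapply Rle_trans; [apply Rmin_r|apply Rmin_r]).
  assert (Pos : forall y, x0 - e <= y <= x0 + e -> 0 < f y).
  { intros y Hy. destruct (Req_dec y x0) as [->|Hne]; [lra|].
    assert (Rabs (f y - f x0) < f x0 / 2).
    { apply Hdd. split. unfold D_x, no_cond. split; auto.
      simpl. unfold R_dist. apply Rabs_def1; lra. }
    apply Rabs_def2 in H1. lra. }
  assert (Ex : forall a b, -1 <= a -> a <= b -> b <= 1 -> ex_RInt f a b).
  { intros a b Ha Hab Hb. apply (ex_RInt_continuous (V:=R_CompleteNormedModule)). intros z Hz.
    rewrite Rmin_left, Rmax_right in Hz by lra. apply H; lra. }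
  unfold I.
  rewrite <- (RInt_Chasles f (-1) (x0 - e) 1) by (apply Ex; lra).
  rewrite <- (RInt_Chasles f (x0 - e) (x0 + e) 1) by (apply Ex; lra).
  assert (0 <= RInt f (-1) (x0 - e)). { apply RInt_ge_0. lra. apply Ex; lra. intros; apply H0; lra. }
  assert (0 <= RInt f (x0 + e) 1). { apply RInt_ge_0. lra. apply Ex; lra. intros; apply H0; lra. }
  assert (0 < RInt f (x0 - e) (x0 + e)). { apply RInt_gt_0. lra. intros; apply Pos; lra. intros; apply H; lra. }
  change (0 < RInt f (-1) (x0 - e) + (RInt f (x0-e) (x0+e) + RInt f (x0+e) 1)). lra.
Qed.

Lemma orth_pol w n p q : Cn w -> monic_orth_poly w n p -> pol n q ->
  I (fun x => p x * q x * w x) = 0.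
Proof.
  intros Hw [Hp Ho] [c Hc].
  assert (Cp : Cn p) by (apply (Cn_pol (S n)); apply monic_pol; auto).
  rewrite (I_ext _ (fun x => p x * psum c n x * w x)) by (intros; rewrite Hc; auto).
  assert (G : forall m, (m <= n)%nat -> I (fun x => p x * psum c m x * w x) = 0).
  { induction m; intros Hm.
    - rewrite (I_ext _ (fun _ => 0)) by (intros; simpl; ring). apply I_zero.
    - rewrite (I_ext _ (fun x => p x * psum c m x * w x + c m * (p x * x ^ m * w x)))
        by (intros; simpl; ring).
      rewrite I_plus. rewrite I_scal. rewrite IHm by lia.
      rewrite (I_eq _ _ (Ho m ltac:(lia))). rewrite Rmult_0_r, Rplus_0_l; reflexivity.
      apply Cn_mult; [apply Cn_mult; auto|auto]. apply (Cn_pol (S m)). apply pol_pow.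
      apply Cn_mult; [apply Cn_mult; auto|auto]. apply (Cn_pol m). exists c; auto.
      apply Cn_scal. apply Cn_mult; [apply Cn_mult; auto|auto]. apply (Cn_pol (S m)). apply pol_pow. }
  apply G; lia.
Qed.

Lemma sorted_lt (z : nat -> R) n : (forall k, (k < n)%nat -> z k < z (S k)) ->
  forall i j, (i < j)%nat -> (j <= n)%nat -> z i < z j.
Proof.
  intros H i j Hij. induction Hij; intros Hn. apply H; lia.
  apply Rlt_trans with (z m). apply IHHij; lia. apply H; lia.
Qed.

Lemma sorted_le (z : nat -> R) n : (forall k, (k < n)%nat -> z k < z (S k)) ->
  forall i j, (i <= j)%nat -> (j <= n)%nat -> z i <= z j.
Proof.
  intros H i j Hij Hj. destruct (Nat.eq_dec i j) as [->|]; [lra|]. left; apply (sorted_lt z n); auto; lia.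
Qed.

Lemma sorted_inj (z : nat -> R) n : (forall k, (k < n)%nat -> z k < z (S k)) ->
  forall i j, (i <= n)%nat -> (j <= n)%nat -> i <> j -> z i <> z j.
Proof.
  intros H i j Hi Hj Hij. destruct (Nat.lt_ge_cases i j).
  assert (z i < z j) by (apply (sorted_lt z n); auto). lra.
  assert (z j < z i) by (apply (sorted_lt z n); auto; lia). lra.
Qed.

Lemma index_match n (z rho : nat -> R) :
  (forall k, (k < n)%nat -> z k < z (S k)) ->
  (forall i, (i < n)%nat -> rho i < rho (S i)) ->
  (forall i, (i <= n)%nat -> exists k, (k <= n)%nat /\ rho i = z k) ->
  forall i, (i <= n)%nat -> rho i = z i.
Proof.
  intros Hz Hr Hm.
  assert (Hs : forall i, exists k, ((i <= n)%nat -> (k <= n)%nat /\ rho i = z k)).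
  { intros i. destruct (Nat.le_gt_cases i n) as [Hi|Hi].
    destruct (Hm i Hi) as [k Hk]. exists k; auto. exists O; intros; lia. }
  set (sg := fun i => proj1_sig (constructive_indefinite_description _ (Hs i))).
  assert (Hsg : forall i, (i <= n)%nat -> (sg i <= n)%nat /\ rho i = z (sg i)).
  { intros i Hi. unfold sg. destruct (constructive_indefinite_description _ (Hs i)); simpl; auto. }
  assert (Inc : forall i, (i < n)%nat -> (sg i < sg (S i))%nat).
  { intros i Hi. destruct (Hsg i ltac:(lia)) as [A1 A2]. destruct (Hsg (S i) ltac:(lia)) as [B1 B2].
    destruct (Nat.lt_ge_cases (sg i) (sg (S i))) as [|Hge]; auto. exfalso.
    assert (z (sg (S i)) <= z (sg i)) by (apply (sorted_le z n); auto).
    assert (rho i < rho (S i)) by auto. lra. }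
  assert (Lo : forall i, (i <= n)%nat -> (i <= sg i)%nat).
  { induction i; intros Hi; [lia|]. assert (i <= sg i)%nat by (apply IHi; lia).
    assert (sg i < sg (S i))%nat by (apply Inc; lia). lia. }
  assert (Hi2 : forall d, (d <= n)%nat -> (sg (n - d) <= n - d)%nat).
  { induction d; intros Hd. replace (n - 0)%nat with n by lia. apply Hsg; lia.
    assert (sg (n - d) <= n - d)%nat by (apply IHd; lia).
    assert (sg (n - S d) < sg (S (n - S d)))%nat by (apply Inc; lia).
    replace (S (n - S d)) with (n - d)%nat in H0 by lia. lia. }
  intros i Hi. destruct (Hsg i Hi) as [_ E]. rewrite E. f_equal.
  assert (sg (n - (n - i)) <= n - (n - i))%nat by (apply Hi2; lia).
  replace (n - (n - i))%nat with i in H by lia. specialize (Lo i Hi). lia.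
Qed.

Definition zk (lam : nat -> R) (k i : nat) : R := if (i <? k)%nat then lam i else lam (S i).
Definition ell (lam : nat -> R) (N k : nat) (x : R) : R := prd N (fun i => x - zk lam k i).

Lemma zk_cases lam k i : (i < k /\ zk lam k i = lam i)%nat \/ (k <= i /\ zk lam k i = lam (S i))%nat.
Proof.
  unfold zk. destruct (Nat.ltb_spec i k); [left|right]; auto.
Qed.

Lemma zk_inj (lam : nat -> R) N k : (forall m, (m < N)%nat -> lam m < lam (S m)) ->
  forall i j, (i < N)%nat -> (j < N)%nat -> i <> j -> zk lam k i <> zk lam k j.
Proof.
  intros Hs i j Hi Hj Hij.
  destruct (zk_cases lam k i) as [[A1 A2]|[A1 A2]]; destruct (zk_cases lam k j) as [[B1 B2]|[B1 B2]];
  rewrite A2, B2; apply (sorted_inj lam N Hs); lia.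
Qed.

Lemma zk_ne (lam : nat -> R) N k : (forall m, (m < N)%nat -> lam m < lam (S m)) -> (k <= N)%nat ->
  forall i, (i < N)%nat -> zk lam k i <> lam k.
Proof.
  intros Hs Hk i Hi.
  destruct (zk_cases lam k i) as [[A1 A2]|[A1 A2]]; rewrite A2; apply (sorted_inj lam N Hs); lia.
Qed.

Lemma ell_props P N (lam : nat -> R) k : monic_poly (S N) P -> sorted_zeros P N lam -> (k <= N)%nat ->
  monic_poly N (ell lam N k) /\ forall x, P x = (x - lam k) * ell lam N k x.
Proof.
  intros HP [Hs [Hz _]] Hk.
  destruct (monic_factor N P (lam k) HP (Hz k Hk)) as [g [Hg Eg]].
  assert (G : forall x, g x = ell lam N k x).
  { apply monic_prod; auto. intros; apply (zk_inj lam N); auto.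
    intros i Hi. assert (Z : P (zk lam k i) = 0).
    { destruct (zk_cases lam k i) as [[A1 A2]|[A1 A2]]; rewrite A2; apply Hz; lia. }
    rewrite Eg in Z. assert (zk lam k i - lam k <> 0) by (apply Rminus_eq_contra; apply (zk_ne lam N); auto).
    apply Rmult_integral in Z; destruct Z; auto; contradiction. }
  split. destruct Hg as [c Hc]. exists c. intros x. rewrite <- G. auto.
  intros x. rewrite Eg, G. auto.
Qed.

Lemma ell_zero P N (lam : nat -> R) k i : monic_poly (S N) P -> sorted_zeros P N lam -> (k <= N)%nat ->
  (i <= N)%nat -> i <> k -> ell lam N k (lam i) = 0.
Proof.
  intros HP HS Hk Hi Hik. destruct (ell_props P N lam k HP HS Hk) as [_ E].
  destruct HS as [Hs [Hz _]]. assert (Z := Hz i Hi). rewrite E in Z.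
  assert (lam i - lam k <> 0) by (apply Rminus_eq_contra; apply (sorted_inj lam N Hs); auto).
  apply Rmult_integral in Z; destruct Z; auto; contradiction.
Qed.

Lemma ell_self_neq0 (lam : nat -> R) N k : (forall m, (m < N)%nat -> lam m < lam (S m)) -> (k <= N)%nat ->
  ell lam N k (lam k) <> 0.
Proof.
  intros Hs Hk. unfold ell. apply prd_neq0. intros i Hi.
  apply Rminus_eq_contra. apply not_eq_sym. apply (zk_ne lam N); auto.
Qed.

Lemma ell_alt (lam : nat -> R) N j : (forall m, (m < N)%nat -> lam m < lam (S m)) -> (j < N)%nat ->
  ell lam N j (lam j) * ell lam N (S j) (lam (S j)) < 0.
Proof.
  intros Hs Hj. unfold ell. rewrite <- prd_mult.
  apply (prd_neg N _ j Hj).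
  - unfold zk. rewrite Nat.ltb_irrefl. assert (Hl : (j <? S j)%nat = true) by (apply Nat.ltb_lt; lia).
    rewrite Hl. assert (lam j < lam (S j)) by (apply Hs; auto). nra.
  - intros i Hi Hij. unfold zk.
    destruct (Nat.ltb_spec i j); destruct (Nat.ltb_spec i (S j)); try lia.
    + assert (lam i < lam j) by (apply (sorted_lt lam N Hs); lia).
      assert (lam i < lam (S j)) by (apply (sorted_lt lam N Hs); lia). nra.
    + assert (lam j < lam (S i)) by (apply (sorted_lt lam N Hs); lia).
      assert (lam (S j) < lam (S i)) by (apply (sorted_lt lam N Hs); lia). nra.
Qed.

Lemma min_exists n (F : nat -> R) : (forall i, (i < n)%nat -> 0 < F i) ->
  exists m, 0 < m /\ forall i, (i < n)%nat -> m <= F i.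
Proof.
  induction n; intros H. exists 1; split; [lra|intros; lia].
  destruct IHn as [m [Hm Hm2]]. intros; apply H; lia.
  exists (Rmin m (F n)). split. apply Rmin_pos; [exact Hm| apply H; lia].
  intros i Hi. destruct (Nat.eq_dec i n) as [->|]. apply Rmin_r.
  eapply Rle_trans. apply Rmin_l. apply Hm2; lia.
Qed.

Lemma gap_exists (lam : nat -> R) N : (forall m, (m < N)%nat -> lam m < lam (S m)) ->
  exists g, 0 < g /\ forall i j, (i <= N)%nat -> (j <= N)%nat -> i <> j -> g <= Rabs (lam i - lam j).
Proof.
  intros Hs. destruct (min_exists N (fun i => lam (S i) - lam i)) as [g [Hg Hg2]].
  intros i Hi; specialize (Hs i Hi); lra.
  exists g; split; auto. intros i j Hi Hj Hij.
  destruct (Nat.lt_ge_cases i j).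
  - assert (lam (S i) <= lam j) by (apply (sorted_le lam N Hs); lia).
    specialize (Hg2 i ltac:(lia)). rewrite Rabs_minus_sym, Rabs_right; lra.
  - assert (lam (S j) <= lam i) by (apply (sorted_le lam N Hs); lia).
    specialize (Hg2 j ltac:(lia)). rewrite Rabs_right; lra.
Qed.

Lemma ell_near (lam : nat -> R) N k g u v : (forall m, (m < N)%nat -> lam m < lam (S m)) -> (k <= N)%nat ->
  (forall i j, (i <= N)%nat -> (j <= N)%nat -> i <> j -> g <= Rabs (lam i - lam j)) ->
  Rabs (u - lam k) < g / 2 -> Rabs (v - lam k) < g / 2 ->
  0 < ell lam N k u * ell lam N k v.
Proof.
  intros Hs Hk Hg Hu Hv. unfold ell. rewrite <- prd_mult. apply prd_pos. intros i Hi.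
  assert (E : exists j, (j <= N)%nat /\ j <> k /\ zk lam k i = lam j).
  { destruct (zk_cases lam k i) as [[A1 A2]|[A1 A2]]; [exists i|exists (S i)]; repeat split; auto; lia. }
  destruct E as [j [Hj [Hjk ->]]]. specialize (Hg j k Hj Hk Hjk).
  apply Rabs_def2 in Hu. apply Rabs_def2 in Hv.
  destruct (Rle_lt_dec 0 (lam j - lam k)).
  - rewrite Rabs_right in Hg by lra. nra.
  - rewrite Rabs_left in Hg by lra. nra.
Qed.

Definition wpos (w : R -> R) := forall x, -1 <= x <= 1 -> 0 < w x.

Lemma I_sq_pos w n q : Cn w -> wpos w -> monic_poly n q -> 0 < I (fun x => q x * q x * w x).
Proof.
  intros Hw Hp Hq. destruct (monic_nonzero n q Hq) as [y [Hy Hqy]].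
  assert (Cq : Cn q) by (apply (Cn_pol (S n)); apply monic_pol; auto).
  apply (I_pos _ y). apply Cn_mult; [apply Cn_mult|]; auto.
  intros x Hx. specialize (Hp x Hx). assert (0 <= q x * q x) by nra. nra.
  auto. specialize (Hp y ltac:(lra)). assert (0 < q y * q y). { destruct (Rlt_dec 0 (q y)); nra. } nra.
Qed.

Lemma Ival w N P x0 l f : Cn w -> monic_orth_poly w (S N) P -> (forall x, P x = (x - x0) * l x) ->
  pol (S N) l -> pol (S N) f -> I (fun x => f x * l x * w x) = f x0 * I (fun x => l x * w x).
Proof.
  intros Hw HP EP Hl Hf.
  destruct (pol_factor N (fun x => f x - f x0) x0) as [s [Hs Es]].
  apply pol_minus; auto; apply pol_const. lra.
  assert (Cl : Cn l) by (eapply Cn_pol; eauto).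
  assert (Cs : Cn s) by (eapply Cn_pol; eauto).
  assert (CP : Cn P) by (apply (Cn_pol (S (S N))); apply monic_pol; apply HP).
  rewrite (I_ext _ (fun x => f x0 * (l x * w x) + P x * s x * w x)).
  2:{ intros x _. rewrite EP. assert (Ex := Es x). simpl in Ex.
      replace (f x) with (f x0 + (x - x0) * s x) by lra. ring. }
  rewrite I_plus, I_scal. rewrite (orth_pol w (S N) P s); auto. ring.
  apply pol_S; auto.
  apply Cn_mult; auto. apply Cn_scal; apply Cn_mult; auto. apply Cn_mult; auto. apply Cn_mult; auto.
Qed.

Lemma W_pos w N P x0 l : Cn w -> wpos w -> monic_orth_poly w (S N) P -> (forall x, P x = (x - x0) * l x) ->
  monic_poly N l -> 0 < l x0 * I (fun x => l x * w x).
Proof.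
  intros Hw Hp HP EP Hl. rewrite <- (Ival w N P x0 l l); auto.
  apply (I_sq_pos w N); auto. apply monic_pol; auto. apply monic_pol; auto.
Qed.

Lemma root_inside w N P x0 l : Cn w -> wpos w -> monic_orth_poly w (S N) P -> (forall x, P x = (x - x0) * l x) ->
  monic_poly N l -> -1 < x0 < 1.
Proof.
  intros Hw Hp HP EP Hl.
  assert (Cl : Cn l) by (apply (Cn_pol (S N)); apply monic_pol; auto).
  assert (O : I (fun x => P x * l x * w x) = 0) by (apply (orth_pol w (S N)); auto; apply monic_pol; auto).
  rewrite (I_ext _ (fun x => l x * l x * (x - x0) * w x)) in O by (intros; rewrite EP; ring).
  destruct (monic_nonzero N l Hl) as [y [Hy Hly]].
  assert (Lp : 0 < l y * l y) by (destruct (Rlt_dec 0 (l y)); nra).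
  assert (Cf : Cn (fun x => l x * l x * (x - x0) * w x)).
  { apply Cn_mult; auto. apply Cn_mult. apply Cn_mult; auto. apply Cn_minus. apply Cn_id. apply Cn_const. }
  split; apply Rnot_le_lt; intros Hx0.
  - assert (0 < I (fun x => l x * l x * (x - x0) * w x)); [|lra].
    apply (I_pos _ y); auto.
    intros x Hx. specialize (Hp x Hx). assert (0 <= l x * l x) by nra. assert (0 <= x - x0) by lra.
    apply Rmult_le_pos; [apply Rmult_le_pos|]; lra.
    specialize (Hp y ltac:(lra)). apply Rmult_lt_0_compat; [apply Rmult_lt_0_compat|]; lra.
  - assert (0 < I (fun x => (-1) * (l x * l x * (x - x0) * w x))); [|rewrite I_scal in H; auto; lra].
    apply (I_pos _ y). apply Cn_scal; auto.
    intros x Hx. specialize (Hp x Hx). assert (0 <= l x * l x) by nra. assert (0 <= x0 - x) by lra.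
    replace (-1 * (l x * l x * (x - x0) * w x)) with (l x * l x * (x0 - x) * w x) by ring.
    apply Rmult_le_pos; [apply Rmult_le_pos|]; lra. lra.
    specialize (Hp y ltac:(lra)).
    replace (-1 * (l y * l y * (y - x0) * w y)) with (l y * l y * (x0 - y) * w y) by ring.
    apply Rmult_lt_0_compat; [apply Rmult_lt_0_compat|]; lra.
Qed.

Lemma pol_continuity n f : pol n f -> continuity f.
Proof. intros H x. apply continuity_pt_filterlim. apply (ct_pol n f x H). Qed.

Lemma root_between n f u v : pol n f -> u < v -> f u * f v < 0 -> exists r, u < r < v /\ f r = 0.
Proof.
  intros Hf Huv Hs.
  destruct (Rlt_dec (f u) 0).
  - assert (0 < f v) by nra.
    destruct (IVT f u v (pol_continuity n f Hf) Huv r H) as [z [Hz Ez]].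
    exists z. split; auto. split; destruct (Req_dec z u); destruct (Req_dec z v); subst; lra.
  - assert (0 < f u) by (destruct (Req_dec (f u) 0); [rewrite H in Hs; lra|lra]).
    assert (f v < 0) by nra.
    destruct (IVT (fun x => - f x) u v) as [z [Hz Ez]]; auto.
    apply (pol_continuity n). apply pol_opp; auto. lra. lra.
    exists z. assert (f z = 0) by lra. split; auto. split; destruct (Req_dec z u); destruct (Req_dec z v); subst; lra.
Qed.

Lemma interlace w N P Q (lam mu : nat -> R) : (1 <= N)%nat -> Cn w -> wpos w ->
  monic_orth_poly w (S N) P -> monic_orth_poly w N Q ->
  sorted_zeros P N lam -> sorted_zeros Q (N - 1) mu ->
  forall k, (k <= N - 1)%nat -> lam k < mu k < lam (S k).
Proof.
  intros HN Hw Hp HP HQ SP SQ.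
  assert (QP : pol (S N) Q) by (apply monic_pol; apply HQ).
  assert (Sgn : forall j, (j <= N)%nat -> 0 < Q (lam j) * ell lam N j (lam j)).
  { intros j Hj. destruct (ell_props P N lam j (proj1 HP) SP Hj) as [Hl El].
    set (l := ell lam N j) in *.
    assert (A1 : I (fun x => Q x * l x * w x) = Q (lam j) * I (fun x => l x * w x)).
    { apply (Ival w N P); auto. apply monic_pol; auto. }
    assert (A2 : I (fun x => Q x * l x * w x) = I (fun x => Q x * Q x * w x)).
    { apply monic_iff in Hl. destruct Hl as [pl [Hpl Epl]].
      destruct (proj1 HQ) as [cq Hcq].
      assert (Cq : Cn Q) by (eapply Cn_pol; eauto).
      assert (Cd : Cn (fun x => pl x - psum cq N x)) by (apply (Cn_pol N); apply pol_minus; auto; exists cq; auto).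
      rewrite (I_ext _ (fun x => Q x * Q x * w x + Q x * (pl x - psum cq N x) * w x)).
      2:{ intros x _. rewrite Epl. rewrite (Hcq x) at 2. ring. }
      rewrite I_plus. rewrite (orth_pol w N Q (fun x => pl x - psum cq N x)); auto. ring.
      apply pol_minus; auto. exists cq; auto.
      apply Cn_mult; auto. apply Cn_mult; auto. apply Cn_mult; auto. apply Cn_mult; auto. }
    assert (A3 := I_sq_pos w N Q Hw Hp (proj1 HQ)).
    assert (A4 := W_pos w N P (lam j) l Hw Hp HP El Hl).
    set (J := I (fun x => l x * w x)) in *.
    assert (0 < Q (lam j) * J) by lra.
    assert (0 < (Q (lam j) * l (lam j)) * (J * J)) by nra.
    assert (0 <= J * J) by nra. destruct (Rle_lt_dec (Q (lam j) * l (lam j)) 0); [|auto]. nra. }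
  assert (Alt : forall j, (j < N)%nat -> Q (lam j) * Q (lam (S j)) < 0).
  { intros j Hj. assert (E := ell_alt lam N j (proj1 SP) Hj).
    assert (S1 := Sgn j ltac:(lia)). assert (S2 := Sgn (S j) ltac:(lia)).
    set (a1 := ell lam N j (lam j)) in *. set (a2 := ell lam N (S j) (lam (S j))) in *.
    destruct (Rlt_dec (Q (lam j) * Q (lam (S j))) 0); auto. exfalso.
    assert (0 <= Q (lam j) * Q (lam (S j))) by lra.
    assert (0 < (Q (lam j) * a1) * (Q (lam (S j)) * a2)) by nra.
    assert ((Q (lam j) * a1) * (Q (lam (S j)) * a2) = (Q (lam j) * Q (lam (S j))) * (a1 * a2)) by ring.
    nra. }
  assert (Ex : forall j, exists r, ((j < N)%nat -> lam j < r < lam (S j) /\ Q r = 0)).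
  { intros j. destruct (Nat.lt_ge_cases j N).
    - destruct (root_between (S N) Q (lam j) (lam (S j)) QP) as [r Hr].
      apply (proj1 SP); auto. apply Alt; auto. exists r; auto.
    - exists 0; intros; lia. }
  set (rho := fun j => proj1_sig (constructive_indefinite_description _ (Ex j))).
  assert (Hrho : forall j, (j < N)%nat -> lam j < rho j < lam (S j) /\ Q (rho j) = 0).
  { intros j Hj. unfold rho. destruct (constructive_indefinite_description _ (Ex j)); simpl; auto. }
  assert (M : forall i, (i <= N - 1)%nat -> rho i = mu i).
  { apply index_match. apply SQ.
    intros i Hi. assert (A := Hrho i ltac:(lia)). assert (B := Hrho (S i) ltac:(lia)). lra.
    intros i Hi. destruct (Hrho i ltac:(lia)) as [_ Z]. destruct SQ as [_ [_ Hall]].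
    destruct (Hall _ Z) as [k [Hk Ek]]. exists k; auto. }
  intros k Hk. rewrite <- M by auto. apply Hrho. lia.
Qed.

Lemma pol_sum m n (F : nat -> R -> R) : (forall k, (k <= n)%nat -> pol m (F k)) ->
  pol m (fun x => sum_f_R0 (fun k => F k x) n).
Proof.
  induction n; intros H. apply (pol_ext m (F 0%nat)); [intros; reflexivity|apply H; lia].
  apply (pol_ext m (fun x => sum_f_R0 (fun k => F k x) n + F (S n) x)); [intros; reflexivity|].
  apply pol_plus. apply IHn; intros; apply H; lia. apply H; lia.
Qed.

Lemma sum_single (F : nat -> R) n i : (i <= n)%nat -> (forall k, (k <= n)%nat -> k <> i -> F k = 0) ->
  sum_f_R0 F n = F i.
Proof.
  induction n; intros Hi H. simpl. replace i with O by lia. auto.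
  simpl. destruct (Nat.eq_dec i (S n)) as [->|Hne].
  - assert (sum_f_R0 F n = 0).
    { clear IHn Hi. assert (forall m, (m <= n)%nat -> sum_f_R0 F m = 0).
      { induction m; intros Hm; simpl. apply H; lia. rewrite IHm by lia. rewrite H by lia. ring. }
      apply H0; lia. }
    rewrite H0; ring.
  - rewrite IHn by (try lia; intros; apply H; lia). rewrite (H (S n)) by lia. ring.
Qed.

Lemma sum_ge_term (F : nat -> R) n i : (i <= n)%nat -> (forall k, (k <= n)%nat -> 0 <= F k) ->
  F i <= sum_f_R0 F n.
Proof.
  induction n; intros Hi H. simpl. replace i with O by lia. lra.
  assert (forall m, (m <= n)%nat -> 0 <= sum_f_R0 F m).
  { induction m; intros Hm; simpl. apply H; lia. assert (0 <= F (S m)) by (apply H; lia).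
    assert (0 <= sum_f_R0 F m) by (apply IHm; lia). lra. }
  simpl. destruct (Nat.eq_dec i (S n)) as [->|Hne].
  - assert (0 <= sum_f_R0 F n) by (apply H0; lia). lra.
  - assert (F i <= sum_f_R0 F n) by (apply IHn; [lia|intros; apply H; lia]).
    assert (0 <= F (S n)) by (apply H; lia). lra.
Qed.

Lemma pol_vanish_P N g P (lam : nat -> R) : pol (S (S N)) g -> monic_poly (S N) P ->
  (forall m, (m < N)%nat -> lam m < lam (S m)) ->
  (forall i, (i <= N)%nat -> P (lam i) = 0) -> (forall i, (i <= N)%nat -> g (lam i) = 0) ->
  exists c, forall x, g x = c * P x.
Proof.
  intros [cg Hg] [cp Hp] Hs HP Hg0.
  exists (cg (S N)).
  assert (H0 : forall x, g x - cg (S N) * P x = 0).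
  { apply (pol_roots (S N) _ lam).
    apply (pol_ext (S N) (fun x => psum cg (S N) x - cg (S N) * psum cp (S N) x)).
    intros x. rewrite Hg, Hp. simpl. ring.
    apply pol_minus. exists cg; auto. apply pol_scal. exists cp; auto.
    intros i j Hi Hj Hij. apply (sorted_inj lam N Hs); lia.
    intros i Hi. rewrite HP, Hg0 by lia. ring. }
  intros x. specialize (H0 x). lra.
Qed.

Lemma quad w N P (lam : nat -> R) f : Cn w -> monic_orth_poly w (S N) P -> sorted_zeros P N lam ->
  pol (S (S N)) f ->
  I (fun x => f x * w x) =
  sum_f_R0 (fun k => f (lam k) * (I (fun x => ell lam N k x * w x) / ell lam N k (lam k))) N.
Proof.
  intros Hw HP SP Hf.
  assert (Hl : forall k, (k <= N)%nat -> pol (S N) (ell lam N k)).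
  { intros k Hk. apply monic_pol. apply (ell_props P N lam k (proj1 HP) SP Hk). }
  set (S0 := fun x => sum_f_R0 (fun k => f (lam k) * / ell lam N k (lam k) * ell lam N k x) N).
  assert (HS0 : pol (S (S N)) S0).
  { apply pol_sum. intros k Hk. apply pol_scal. apply pol_S. apply Hl; auto. }
  destruct (pol_vanish_P N (fun x => f x - S0 x) P lam) as [c Hc].
  apply pol_minus; auto. apply (proj1 HP). apply (proj1 SP).
  intros i Hi. apply (proj2 SP); auto.
  intros i Hi. unfold S0. rewrite (sum_single _ N i Hi).
  field. apply (ell_self_neq0 lam N i (proj1 SP) Hi).
  intros k Hk Hki. rewrite (ell_zero P N lam k i (proj1 HP) SP Hk Hi) by auto. ring.
  assert (CS0 : Cn S0) by (eapply Cn_pol; eauto).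
  assert (CP : Cn P) by (apply (Cn_pol (S (S N))); apply monic_pol; apply HP).
  assert (Cf : Cn f) by (eapply Cn_pol; eauto).
  rewrite (I_ext _ (fun x => c * (P x * 1 * w x) + S0 x * w x)).
  2:{ intros x _. specialize (Hc x). replace (f x) with (c * P x + S0 x) by lra. ring. }
  rewrite I_plus, I_scal. rewrite (orth_pol w (S N) P (fun _ => 1)); auto. 2: apply pol_const.
  unfold S0. rewrite (I_ext _ (fun x => sum_f_R0 (fun k => f (lam k) * / ell lam N k (lam k) * (ell lam N k x * w x)) N)).
  2:{ intros x _. rewrite (Rmult_comm (sum_f_R0 _ N) (w x)), scal_sum. apply sum_eq. intros; ring. }
  rewrite I_sum. rewrite Rmult_0_r, Rplus_0_l. apply sum_eq. intros k Hk.
  rewrite I_scal. unfold Rdiv. ring.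
  apply Cn_mult; auto; eapply Cn_pol; eauto.
  intros k Hk. apply Cn_scal. apply Cn_mult; auto; eapply Cn_pol; eauto.
  apply Cn_mult; auto. apply Cn_mult; auto. apply Cn_const.
  apply Cn_scal. apply Cn_mult; auto. apply Cn_mult; auto. apply Cn_const.
  apply Cn_mult; auto.
Qed.

Lemma onepos a x : -1 < a < 1 -> -1 <= x <= 1 -> 0 < 1 + a * x.
Proof. intros Ha Hx. destruct (Rle_lt_dec 0 a); nra. Qed.

Lemma ct_lin_pow a n (x : R) : continuous (fun y => (1 + a * y) ^ n) x.
Proof.
  induction n; simpl. apply ct_const. apply ct_mult; auto.
  apply ct_plus. apply ct_const. apply ct_mult. apply ct_const. apply ct_id.
Qed.

Lemma Cn_omegat a : -1 < a < 1 -> Cn (omegat a).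
Proof.
  intros Ha x Hx. unfold omegat. apply (ct_inv (fun y => (1 + a * y) ^ 5)). apply ct_lin_pow.
  apply pow_nonzero. assert (0 < 1 + a * x) by (apply onepos; auto). lra.
Qed.

Lemma Cn_omega a : -1 < a < 1 -> Cn (omega a).
Proof.
  intros Ha x Hx. unfold omega. apply (ct_inv (fun y => (1 + a * y) ^ 4)). apply ct_lin_pow.
  apply pow_nonzero. assert (0 < 1 + a * x) by (apply onepos; auto). lra.
Qed.

Lemma wpos_omegat a : -1 < a < 1 -> wpos (omegat a).
Proof. intros Ha x Hx. unfold omegat. apply Rinv_0_lt_compat. apply pow_lt. apply onepos; auto. Qed.

Lemma omega_eq a x : -1 < a < 1 -> -1 <= x <= 1 -> omega a x = (1 + a * x) * omegat a x.
Proof.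
  intros Ha Hx. assert (0 < 1 + a * x) by (apply onepos; auto). unfold omega, omegat.
  field. lra.
Qed.

Lemma pol_quad a c : pol 3 (fun x => (x - c) * (1 + a * x)).
Proof.
  apply (pol_ext 3 (fun x => a * x ^ 2 + ((1 - a * c) * x ^ 1 + (- c) * x ^ 0))). intros; simpl; ring.
  apply pol_plus. apply pol_mon. apply pol_plus. apply (pol_le 2); [lia|apply pol_mon]. apply (pol_le 1); [lia|apply pol_mon].
Qed.

Lemma part3 a N P (lam : nat -> R) A B : (1 <= N)%nat -> -1 < a < 1 ->
  monic_orth_poly (omegat a) (S N) P -> sorted_zeros P N lam ->
  RInt_eq (fun mu => mu * omega a mu) (-1) 1 A -> RInt_eq (fun mu => omega a mu) (-1) 1 B ->
  0 < B /\ lam 0%nat < A / B < lam N.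
Proof.
  intros HN Ha HP SP HA HB. apply I_eq in HA. apply I_eq in HB.
  set (w := omegat a) in *.
  assert (Cw : Cn w) by (apply Cn_omegat; auto).
  assert (Pw : wpos w) by (apply wpos_omegat; auto).
  assert (Cw' : Cn (omega a)) by (apply Cn_omega; auto).
  assert (Ins : forall k, (k <= N)%nat -> -1 < lam k < 1).
  { intros k Hk. destruct (ell_props P N lam k (proj1 HP) SP Hk) as [Hl El].
    apply (root_inside w N P (lam k) (ell lam N k)); auto. }
  assert (Wp : forall k, (k <= N)%nat -> 0 < I (fun x => ell lam N k x * w x) / ell lam N k (lam k)).
  { intros k Hk. destruct (ell_props P N lam k (proj1 HP) SP Hk) as [Hl El].
    assert (A1 := W_pos w N P (lam k) _ Cw Pw HP El Hl).
    assert (A2 := ell_self_neq0 lam N k (proj1 SP) Hk).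
    set (u := ell lam N k (lam k)) in *. set (J := I (fun x => ell lam N k x * w x)) in *.
    replace (J / u) with ((u * J) / (u * u)) by (field; auto).
    apply Rdiv_lt_0_compat; auto. destruct (Rlt_dec 0 u); nra. }
  assert (Bpos : 0 < B).
  { rewrite <- HB. apply (I_pos _ 0); auto. intros x Hx. left. rewrite omega_eq by auto.
    apply Rmult_lt_0_compat. apply onepos; auto. apply Pw; auto. lra.
    rewrite omega_eq by lra. apply Rmult_lt_0_compat. apply onepos; lra. apply Pw; lra. }
  assert (Q : forall c, A - c * B = I (fun x => (x - c) * (1 + a * x) * w x)).
  { intros c. rewrite <- HA, <- HB. rewrite <- I_scal by auto. rewrite <- I_minus.
    apply I_ext. intros x Hx. rewrite omega_eq by auto. unfold w; ring.
    apply Cn_mult; auto. apply Cn_id. apply Cn_scal; auto. }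
  assert (Lo : 0 < A - lam 0%nat * B).
  { rewrite Q.
    assert (Pq : pol (S (S N)) (fun x => (x - lam 0%nat) * (1 + a * x))) by (apply (pol_le 3); [lia|apply pol_quad]).
    rewrite (quad w N P lam _ Cw HP SP Pq).
    eapply Rlt_le_trans; [|apply (sum_ge_term _ N N); auto].
    - apply Rmult_lt_0_compat; [|apply Wp; auto].
      assert (lam 0%nat < lam N) by (apply (sorted_lt lam N (proj1 SP)); lia).
      assert (0 < 1 + a * lam N) by (apply onepos; auto; specialize (Ins N ltac:(lia)); lra). nra.
    - intros k Hk. apply Rmult_le_pos; [|left; apply Wp; auto].
      assert (lam 0%nat <= lam k) by (apply (sorted_le lam N (proj1 SP)); lia).
      assert (0 < 1 + a * lam k) by (apply onepos; auto; specialize (Ins k Hk); lra). nra. }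
  assert (Hi : 0 < lam N * B - A).
  { assert (E : lam N * B - A = I (fun x => (x - lam N) * (1 + a * x) * (-1) * w x)).
    { rewrite (I_ext _ (fun x => (-1) * ((x - lam N) * (1 + a * x) * w x))) by (intros; ring).
      rewrite I_scal, <- Q. ring. apply Cn_mult; auto. apply (Cn_pol 3). apply pol_quad. }
    rewrite E.
    rewrite (quad w N P lam (fun x => (x - lam N) * (1 + a * x) * (-1))).
    eapply Rlt_le_trans; [|apply (sum_ge_term _ N 0); [lia|]].
    - apply Rmult_lt_0_compat; [|apply Wp; auto; lia].
      assert (lam 0%nat < lam N) by (apply (sorted_lt lam N (proj1 SP)); lia).
      assert (0 < 1 + a * lam 0%nat) by (apply onepos; auto; specialize (Ins 0%nat ltac:(lia)); lra). nra.
    - intros k Hk. apply Rmult_le_pos; [|left; apply Wp; auto].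
      assert (lam k <= lam N) by (apply (sorted_le lam N (proj1 SP)); lia).
      assert (0 < 1 + a * lam k) by (apply onepos; auto; specialize (Ins k Hk); lra). nra.
    - auto.
    - auto.
    - auto.
    - apply (pol_le 3); [lia|]. apply (pol_ext 3 (fun x => (-1) * ((x - lam N) * (1 + a * x)))); [intros; ring|].
      apply pol_scal. apply pol_quad. }
  split; auto. split.
  - apply Rmult_lt_reg_r with B; auto. unfold Rdiv. rewrite Rmult_assoc, Rinv_l by lra. lra.
  - apply Rmult_lt_reg_r with B; auto. unfold Rdiv. rewrite Rmult_assoc, Rinv_l by lra. lra.
Qed.

Lemma RInt_eq_I f : Cn f -> RInt_eq f (-1) 1 (I f).
Proof.
  intros H. assert (E := Cn_ex f H). exists (ex_RInt_Reals_0 f (-1) 1 E).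
  unfold I. rewrite (RInt_Reals f (-1) 1 (ex_RInt_Reals_0 f (-1) 1 E)). auto.
Qed.

Lemma part4 a N (phi : nat -> R -> R) (f : nat -> R) E0 E1 : -1 < a < 1 ->
  (forall k, monic_orth_poly (omega a) k (phi k)) -> f 0%nat <> 0 -> f 1%nat = 0 ->
  RInt_eq (fun mu => sum_f_R0 (fun i => f i * omega a mu * phi i mu) N) (-1) 1 E0 ->
  RInt_eq (fun mu => mu * sum_f_R0 (fun i => f i * omega a mu * phi i mu) N) (-1) 1 E1 ->
  E0 = f 0%nat * I (omega a) /\ E1 = f 0%nat * I (fun mu => mu * omega a mu).
Proof.
  intros Ha Hphi Hf0 Hf1 H0 H1. apply I_eq in H0. apply I_eq in H1.
  assert (Cw : Cn (omega a)) by (apply Cn_omega; auto).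
  assert (Cp : forall i, Cn (phi i)) by (intros i; apply (Cn_pol (S i)); apply monic_pol; apply Hphi).
  assert (P0 : forall x, phi 0%nat x = 1).
  { intros x. destruct (proj1 (Hphi 0%nat)) as [c Hc]. rewrite Hc. simpl. ring. }
  split.
  - rewrite <- H0. rewrite I_sum.
    rewrite (sum_single _ N 0). rewrite (I_ext _ (fun x => f 0%nat * omega a x)) by (intros; rewrite P0; ring).
    apply I_scal; auto. lia.
    intros k Hk Hk0. rewrite (I_ext _ (fun x => f k * (phi k x * x ^ 0 * omega a x))) by (intros; simpl; ring).
    rewrite I_scal. rewrite (I_eq _ _ (proj2 (Hphi k) 0%nat ltac:(lia))). ring.
    apply Cn_mult; auto. apply Cn_mult; auto. apply (Cn_pol 1); apply pol_pow.
    intros i Hi. apply Cn_mult; auto. apply Cn_scal; auto.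
  - rewrite <- H1.
    rewrite (I_ext _ (fun x => sum_f_R0 (fun i => f i * (phi i x * x ^ 1 * omega a x)) N)).
    2:{ intros x _. rewrite scal_sum. apply sum_eq. intros; simpl; ring. }
    rewrite I_sum.
    rewrite (sum_single _ N 0). rewrite I_scal. f_equal. apply I_ext. intros; rewrite P0; simpl; ring.
    apply Cn_mult; auto. apply Cn_mult; auto. apply (Cn_pol 2). apply pol_pow. lia.
    intros k Hk Hk0. rewrite I_scal. destruct (Nat.eq_dec k 1) as [->|Hk1].
    rewrite Hf1; ring.
    rewrite (I_eq _ _ (proj2 (Hphi k) 1%nat ltac:(lia))). ring.
    apply Cn_mult; auto. apply Cn_mult; auto. apply (Cn_pol 2). apply pol_pow.
    intros i Hi. apply Cn_scal. apply Cn_mult; auto. apply Cn_mult; auto. apply (Cn_pol 2). apply pol_pow.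
Qed.

Lemma mono_bound (x y : R) i j : 0 <= x <= 2 -> 0 <= y <= 2 -> 0 <= x ^ i * y ^ j <= 2 ^ (i + j).
Proof.
  intros Hx Hy. split. apply Rmult_le_pos; apply pow_le; lra.
  rewrite pow_add. apply Rmult_le_compat; try (apply pow_le; lra); apply pow_incr; lra.
Qed.

Lemma low_bound (x y d : R) i j : 0 < d -> d <= x -> d <= y -> d ^ (i + j) <= x ^ i * y ^ j.
Proof.
  intros Hd Hx Hy. rewrite pow_add. apply Rmult_le_compat; try (apply pow_le; lra); apply pow_incr; lra.
Qed.

Definition Dl (a b mu : R) := (omegat a mu - omegat b mu) / (b - a).
Definition Dw (a mu : R) := 5 * mu / (1 + a * mu) ^ 6.

Lemma Dl_formula a b mu : b <> a -> 0 < 1 + a * mu -> 0 < 1 + b * mu ->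
  Dl a b mu = mu * (let u := 1 + a * mu in let v := 1 + b * mu in
     (v^4 + v^3*u + v^2*u^2 + v*u^3 + u^4) / (u^5 * v^5)).
Proof.
  intros Hab Hu Hv. unfold Dl, omegat. simpl.
  field. repeat split; try lra; apply Rminus_eq_contra; auto.
Qed.

Lemma Dl_Dw_formula a b mu : b <> a -> 0 < 1 + a * mu -> 0 < 1 + b * mu ->
  Dl a b mu - Dw a mu = mu * mu * (a - b) * (let u := 1 + a * mu in let v := 1 + b * mu in
     (5*v^4 + 4*u*v^3 + 3*u^2*v^2 + 2*u^3*v + u^4) / (u^6 * v^5)).
Proof.
  intros Hab Hu Hv. unfold Dl, Dw, omegat. simpl.
  field. repeat split; try lra; apply Rminus_eq_contra; auto.
Qed.

Lemma near_b a b : -1 < a < 1 -> Rabs (b - a) < (1 - Rabs a) / 2 ->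
  -1 < b < 1 /\ forall mu, -1 <= mu <= 1 -> (1 - Rabs a) / 2 <= 1 + b * mu <= 2.
Proof.
  intros Ha Hb. assert (Rabs b < 1 - (1 - Rabs a) / 2).
  { assert (Rabs b <= Rabs a + Rabs (b - a)). { replace b with (a + (b - a)) at 1 by ring. apply Rabs_triang. } lra. }
  assert (Rabs a < 1) by (apply Rabs_def1; lra).
  split. apply Rabs_def2 in H. lra.
  intros mu Hmu. apply Rabs_def2 in H. destruct (Rle_lt_dec 0 b); split; nra.
Qed.

Lemma Dl_bounds a : -1 < a < 1 -> exists K K2, 0 <= K /\ 0 <= K2 /\
  forall b mu, 0 < Rabs (b - a) < (1 - Rabs a) / 2 -> -1 <= mu <= 1 ->
  Rabs (Dl a b mu) <= K /\ Rabs (Dl a b mu - Dw a mu) <= K2 * Rabs (b - a).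
Proof.
  intros Ha. set (d := (1 - Rabs a) / 2).
  assert (Hd : 0 < d) by (unfold d; assert (Rabs a < 1) by (apply Rabs_def1; lra); lra).
  exists (80 / d ^ 10), (240 / d ^ 11). split. apply Rdiv_le_0_compat; [lra| apply pow_lt; auto].
  split. apply Rdiv_le_0_compat; [lra| apply pow_lt; auto].
  intros b mu Hb Hmu.
  assert (Hba : b <> a). { intros ->. rewrite Rminus_diag, Rabs_R0 in Hb. lra. }
  destruct (near_b a b Ha ltac:(unfold d in Hb; lra)) as [_ Hv].
  destruct (near_b a a Ha ltac:(rewrite Rminus_diag, Rabs_R0; unfold d in Hd; lra)) as [_ Hu].
  specialize (Hv mu Hmu). specialize (Hu mu Hmu). fold d in Hv, Hu.
  set (u := 1 + a * mu) in *. set (v := 1 + b * mu) in *.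
  assert (Hmu' : Rabs mu <= 1) by (apply Rabs_le; lra).
  split.
  - rewrite (Dl_formula a b mu Hba ltac:(unfold u in Hu; lra) ltac:(unfold v in Hv; lra)). cbv zeta. fold u. fold v. rewrite Rabs_mult.
    assert (B1 : 0 <= v^4 + v^3*u + v^2*u^2 + v*u^3 + u^4 <= 80).
    { destruct (mono_bound v u 4 0) as [A1 A2]; try lra.
      destruct (mono_bound v u 3 1) as [B1 B2]; try lra.
      destruct (mono_bound v u 2 2) as [C1 C2]; try lra.
      destruct (mono_bound v u 1 3) as [D1 D2]; try lra.
      destruct (mono_bound v u 0 4) as [E1 E2]; try lra.
      simpl in *. lra. }
    assert (B2 : d ^ 10 <= u ^ 5 * v ^ 5) by (apply (low_bound u v d 5 5); lra).
    assert (B3 : 0 < d ^ 10) by (apply pow_lt; auto).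
    rewrite (Rabs_right (_ / _)).
    2:{ apply Rle_ge. apply Rdiv_le_0_compat; lra. }
    apply Rle_trans with (1 * (80 / d ^ 10)).
    apply Rmult_le_compat; try lra. apply Rabs_pos. apply Rdiv_le_0_compat; lra.
    unfold Rdiv. apply Rmult_le_compat; try lra. left; apply Rinv_0_lt_compat; lra.
    apply Rinv_le_contravar; lra. lra.
  - rewrite (Dl_Dw_formula a b mu Hba ltac:(unfold u in Hu; lra) ltac:(unfold v in Hv; lra)). cbv zeta. fold u. fold v.
    assert (B1 : 0 <= 5*v^4 + 4*u*v^3 + 3*u^2*v^2 + 2*u^3*v + u^4 <= 240).
    { destruct (mono_bound v u 4 0) as [A1 A2]; try lra.
      destruct (mono_bound v u 3 1) as [B1 B2]; try lra.
      destruct (mono_bound v u 2 2) as [C1 C2]; try lra.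
      destruct (mono_bound v u 1 3) as [D1 D2]; try lra.
      destruct (mono_bound v u 0 4) as [E1 E2]; try lra.
      simpl in *. nra. }
    assert (B2 : d ^ 11 <= u ^ 6 * v ^ 5) by (apply (low_bound u v d 6 5); lra).
    assert (B3 : 0 < d ^ 11) by (apply pow_lt; auto).
    rewrite !Rabs_mult. rewrite (Rabs_right (_ / _)).
    2:{ apply Rle_ge. apply Rdiv_le_0_compat; lra. }
    rewrite (Rabs_minus_sym a b).
    assert (0 <= Rabs mu * Rabs mu <= 1) by (pose proof (Rabs_pos mu); split; nra).
    assert (Q : (5*v^4 + 4*u*v^3 + 3*u^2*v^2 + 2*u^3*v + u^4) / (u^6 * v^5) <= 240 / d ^ 11).
    { unfold Rdiv. apply Rmult_le_compat; try lra. left; apply Rinv_0_lt_compat; lra.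
      apply Rinv_le_contravar; lra. }
    assert (0 <= (5*v^4 + 4*u*v^3 + 3*u^2*v^2 + 2*u^3*v + u^4) / (u^6 * v^5)) by (apply Rdiv_le_0_compat; lra).
    assert (0 <= Rabs (b - a)) by apply Rabs_pos.
    set (X := (5*v^4 + 4*u*v^3 + 3*u^2*v^2 + 2*u^3*v + u^4) / (u^6 * v^5)) in *.
    set (Y := Rabs mu * Rabs mu) in *.
    replace (Rabs mu * Rabs mu * Rabs (b - a) * X) with (Y * (Rabs (b - a) * X)) by (unfold Y; ring).
    assert (Rabs (b - a) * X <= Rabs (b - a) * (240 / d ^ 11)) by (apply Rmult_le_compat_l; lra).
    assert (0 <= Rabs (b - a) * X) by (apply Rmult_le_pos; lra).
    assert (Y * (Rabs (b - a) * X) <= 1 * (Rabs (b - a) * X)) by (apply Rmult_le_compat_r; lra).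
    lra.
Qed.

Lemma pow_abs_le1 (x : R) n : -1 <= x <= 1 -> Rabs (x ^ n) <= 1.
Proof.
  intros Hx. rewrite <- RPow_abs. rewrite <- (pow1 n).
  apply pow_incr. split. apply Rabs_pos. apply Rabs_le; lra.
Qed.

Lemma pol_bound n f : pol n f -> exists M, 0 <= M /\ forall x, -1 <= x <= 1 -> Rabs (f x) <= M.
Proof.
  intros [c Hc]. exists (psum (fun i => Rabs (c i)) n 1). 
  assert (G : forall m x, -1 <= x <= 1 -> Rabs (psum c m x) <= psum (fun i => Rabs (c i)) m 1).
  { induction m; intros x Hx; simpl. rewrite Rabs_R0; lra.
    eapply Rle_trans. apply Rabs_triang. rewrite Rabs_mult. rewrite pow1.
    assert (Rabs (x ^ m) <= 1) by (apply pow_abs_le1; auto).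
    assert (Rabs (c m) * Rabs (x ^ m) <= Rabs (c m) * 1) by (apply Rmult_le_compat_l; auto; apply Rabs_pos).
    specialize (IHm x Hx). lra. }
  split. eapply Rle_trans. apply Rabs_pos. apply (G n 0). lra.
  intros x Hx. rewrite Hc. apply G; auto.
Qed.

Lemma fin_bound n (F : nat -> R -> R) : (forall j, (j <= n)%nat -> exists M, forall x, -1 <= x <= 1 -> Rabs (F j x) <= M) ->
  exists M, 0 <= M /\ forall j, (j <= n)%nat -> forall x, -1 <= x <= 1 -> Rabs (F j x) <= M.
Proof.
  induction n; intros H.
  - destruct (H 0%nat ltac:(lia)) as [M HM]. exists (Rmax 0 M). split. apply Rmax_l.
    intros j Hj x Hx. replace j with 0%nat by lia. eapply Rle_trans. apply HM; auto. apply Rmax_r.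
  - destruct IHn as [M1 [HM1 HM1']]. intros; apply H; lia.
    destruct (H (S n) ltac:(lia)) as [M2 HM2]. exists (Rmax M1 M2). split.
    eapply Rle_trans; [apply HM1|apply Rmax_l].
    intros j Hj x Hx. destruct (Nat.eq_dec j (S n)) as [->|].
    eapply Rle_trans. apply HM2; auto. apply Rmax_r.
    eapply Rle_trans. apply HM1'; auto; lia. apply Rmax_l.
Qed.

Lemma fin_max n (F : nat -> R) : exists M, 0 <= M /\ forall j, (j <= n)%nat -> F j <= M.
Proof.
  destruct (fin_bound n (fun j _ => F j)) as [M [HM HM']].
  intros j Hj. exists (Rabs (F j)). intros; lra.
  exists M. split; auto. intros j Hj. specialize (HM' j Hj 0 ltac:(lra)). 
  eapply Rle_trans. apply Rle_abs. auto.
Qed.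

Lemma pol_lip n f x : pol n f -> exists L, 0 <= L /\ forall y, -1 <= y <= 1 -> Rabs (f y - f x) <= L * Rabs (y - x).
Proof.
  intros Hf. destruct (pol_factor n (fun y => f y - f x) x) as [g [Hg Eg]].
  apply pol_minus. apply pol_S; auto. apply pol_const. lra.
  destruct (pol_bound n g Hg) as [M [HM HM']]. exists M. split; auto.
  intros y Hy. rewrite Eg. rewrite Rabs_mult. rewrite Rmult_comm. apply Rmult_le_compat_r. apply Rabs_pos. auto.
Qed.

Lemma div_close A0 B0 eps : B0 <> 0 -> 0 < eps -> exists eta, 0 < eta /\ eta <= Rabs B0 / 2 /\
  forall A B, Rabs (A - A0) < eta -> Rabs (B - B0) < eta -> Rabs (A / B - A0 / B0) < eps.
Proof.
  intros HB He. assert (Hb : 0 < Rabs B0) by (apply Rabs_pos_lt; auto).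
  assert (Ha : 0 <= Rabs A0) by apply Rabs_pos.
  set (eta := Rmin (Rabs B0 / 2) (eps * (Rabs B0 * Rabs B0) / (4 * (Rabs A0 + Rabs B0)))).
  assert (Het : 0 < eta). { unfold eta. apply Rmin_pos. lra. apply Rdiv_lt_0_compat; [apply Rmult_lt_0_compat; [lra|apply Rmult_lt_0_compat; lra] | lra]. }
  exists eta. split; auto. split. apply Rmin_l.
  intros A B H1 H2.
  assert (E1 : eta <= eps * (Rabs B0 * Rabs B0) / (4 * (Rabs A0 + Rabs B0))) by apply Rmin_r.
  assert (E2 : eta <= Rabs B0 / 2) by apply Rmin_l.
  assert (HBb : Rabs B0 / 2 <= Rabs B).
  { assert (Rabs B0 <= Rabs B + Rabs (B - B0)).
    { replace B0 with (B - (B - B0)) at 1 by ring. eapply Rle_trans. apply Rabs_triang. rewrite Rabs_Ropp. lra. }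
    lra. }
  assert (HBn : B <> 0). { intros ->. rewrite Rabs_R0 in HBb. lra. }
  replace (A / B - A0 / B0) with (((A - A0) * B0 - A0 * (B - B0)) / (B * B0)) by (field; auto).
  unfold Rdiv. rewrite Rabs_mult. rewrite Rabs_inv. rewrite Rabs_mult.
  assert (N1 : Rabs ((A - A0) * B0 - A0 * (B - B0)) <= eta * (Rabs B0 + Rabs A0)).
  { eapply Rle_trans. apply Rabs_triang. rewrite Rabs_Ropp, !Rabs_mult.
    assert (Rabs (A - A0) * Rabs B0 <= eta * Rabs B0) by (apply Rmult_le_compat_r; lra).
    assert (Rabs A0 * Rabs (B - B0) <= Rabs A0 * eta) by (apply Rmult_le_compat_l; lra). lra. }
  assert (D1 : Rabs B0 * Rabs B0 / 2 <= Rabs B * Rabs B0) by nra.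
  assert (P1 : 0 < Rabs B * Rabs B0) by nra.
  apply Rle_lt_trans with (eta * (Rabs B0 + Rabs A0) * / (Rabs B0 * Rabs B0 / 2)).
  apply Rmult_le_compat. apply Rabs_pos. left; apply Rinv_0_lt_compat; auto. auto.
  apply Rinv_le_contravar. nra. auto.
  assert (eta * (Rabs B0 + Rabs A0) <= eps * (Rabs B0 * Rabs B0) / 4).
  { apply Rle_trans with (eps * (Rabs B0 * Rabs B0) / (4 * (Rabs A0 + Rabs B0)) * (Rabs B0 + Rabs A0)).
    apply Rmult_le_compat_r; lra. right. field. lra. }
  apply Rle_lt_trans with (eps * (Rabs B0 * Rabs B0) / 4 * / (Rabs B0 * Rabs B0 / 2)).
  apply Rmult_le_compat_r; auto. left; apply Rinv_0_lt_compat; nra.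
  replace (eps * (Rabs B0 * Rabs B0) / 4 * / (Rabs B0 * Rabs B0 / 2)) with (eps / 2) by (field; lra). lra.
Qed.

Lemma basis_exists (phi : nat -> R -> R) : (forall j, monic_poly j (phi j)) ->
  forall n q, pol (S n) q -> exists d : nat -> R, forall x, q x = sum_f_R0 (fun j => d j * phi j x) n.
Proof.
  intros Hphi. induction n; intros q [c Hc].
  - exists (fun _ => c 0%nat). intros x. rewrite Hc. destruct (Hphi 0%nat) as [c0 Hc0].
    simpl. rewrite Hc0. simpl. ring.
  - destruct (monic_iff (S n) (phi (S n))) as [H1 _]. destruct (H1 (Hphi (S n))) as [p [Hp Ep]].
    destruct (IHn (fun x => psum c (S n) x - c (S n) * p x)) as [d Hd].
    apply pol_minus. exists c; auto. apply pol_scal; auto.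
    exists (fun j => if (j =? S n)%nat then c (S n) else d j). intros x.
    simpl sum_f_R0. rewrite Nat.eqb_refl.
    rewrite (sum_eq _ (fun j => d j * phi j x)).
    rewrite <- Hd. rewrite Hc, Ep. simpl. ring.
    intros i Hi. destruct (Nat.eqb_spec i (S n)); [lia|auto].
Qed.

Lemma orth_phi w (phi : nat -> R -> R) i j : Cn w -> (forall j, monic_orth_poly w j (phi j)) -> i <> j ->
  I (fun x => phi i x * phi j x * w x) = 0.
Proof.
  intros Hw Hphi Hij. destruct (Nat.lt_ge_cases j i).
  - apply (orth_pol w i); auto. apply (pol_le (S j)); [lia|]. apply monic_pol, Hphi.
  - rewrite (I_ext _ (fun x => phi j x * phi i x * w x)) by (intros; ring).
    apply (orth_pol w j); auto. apply (pol_le (S i)); [lia|]. apply monic_pol, Hphi.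
Qed.

Lemma Cn_phi w (phi : nat -> R -> R) j : (forall j, monic_orth_poly w j (phi j)) -> Cn (phi j).
Proof. intros H. apply (Cn_pol (S j)). apply monic_pol, H. Qed.

Lemma coef_formula w (phi : nat -> R -> R) n d i : Cn w -> (forall j, monic_orth_poly w j (phi j)) -> (i <= n)%nat ->
  I (fun x => sum_f_R0 (fun j => d j * phi j x) n * phi i x * w x) = d i * I (fun x => phi i x * phi i x * w x).
Proof.
  intros Hw Hphi Hi.
  rewrite (I_ext _ (fun x => sum_f_R0 (fun j => d j * (phi j x * phi i x * w x)) n)).
  2:{ intros x _. rewrite Rmult_assoc, (Rmult_comm (sum_f_R0 _ n)), scal_sum. apply sum_eq. intros; ring. }
  rewrite I_sum. rewrite (sum_single _ n i Hi). rewrite I_scal; auto.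
  apply Cn_mult; auto; apply Cn_mult; eapply Cn_phi; eauto.
  intros k Hk Hki. rewrite I_scal. rewrite (orth_phi w phi k i); auto. ring.
  apply Cn_mult; auto; apply Cn_mult; eapply Cn_phi; eauto.
  intros k Hk. apply Cn_scal. apply Cn_mult; auto; apply Cn_mult; eapply Cn_phi; eauto.
Qed.

Definition hh w (phi : nat -> R -> R) j := I (fun x => phi j x * phi j x * w x).

Lemma hh_pos w phi j : Cn w -> wpos w -> (forall j, monic_orth_poly w j (phi j)) -> 0 < hh w phi j.
Proof. intros Hw Hp Hphi. apply (I_sq_pos w j); auto. apply Hphi. Qed.

Lemma expand w (phi : nat -> R -> R) n q : Cn w -> wpos w -> (forall j, monic_orth_poly w j (phi j)) ->
  pol (S n) q -> forall x, q x = sum_f_R0 (fun j => I (fun y => q y * phi j y * w y) / hh w phi j * phi j x) n.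
Proof.
  intros Hw Hp Hphi Hq.
  destruct (basis_exists phi (fun j => proj1 (Hphi j)) n q Hq) as [d Hd].
  intros x. rewrite Hd. apply sum_eq. intros i Hi. f_equal.
  rewrite (I_ext _ (fun y => sum_f_R0 (fun j => d j * phi j y) n * phi i y * w y)) by (intros; rewrite Hd; auto).
  rewrite (coef_formula w phi n d i); auto. unfold hh. field.
  assert (0 < hh w phi i) by (apply hh_pos; auto). unfold hh in H. lra.
Qed.

Ltac cn := repeat first [ assumption | apply Cn_minus | apply Cn_plus | apply Cn_scal | apply Cn_mult | apply Cn_const | apply Cn_id | match goal with H : forall _ : nat, Cn _ |- _ => apply H end ].

Lemma prod3_bound x y z A B C : Rabs x <= A -> Rabs y <= B -> Rabs z <= C -> Rabs (x * y * z) <= A * B * C.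
Proof.
  intros. rewrite !Rabs_mult. assert (0 <= Rabs x) by apply Rabs_pos. assert (0 <= Rabs y) by apply Rabs_pos.
  assert (0 <= Rabs z) by apply Rabs_pos.
  apply Rmult_le_compat; try apply Rmult_le_pos; auto. apply Rmult_le_compat; auto.
Qed.

Lemma sum_abs_bound n (c : nat -> R) (F : nat -> R) B : (forall j, (j <= n)%nat -> Rabs (F j) <= B) ->
  Rabs (sum_f_R0 (fun j => c j * F j) n) <= sum_f_R0 (fun j => Rabs (c j)) n * B.
Proof.
  intros H. eapply Rle_trans. apply sum_f_R0_triangle.
  rewrite Rmult_comm, scal_sum. apply sum_Rle. intros j Hj. rewrite Rabs_mult.
  apply Rmult_le_compat_l. apply Rabs_pos. apply H; auto.
Qed.

Lemma Cn_Dw a : -1 < a < 1 -> Cn (Dw a).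
Proof.
  intros Ha x Hx. unfold Dw. apply (ct_ext (fun y => (5 * y) * / (1 + a * y) ^ 6)); [intros; reflexivity|].
  apply ct_mult. apply ct_mult. apply ct_const. apply ct_id.
  apply (ct_inv (fun y => (1 + a * y) ^ 6)). apply ct_lin_pow.
  apply pow_nonzero. assert (0 < 1 + a * x) by (apply onepos; auto). lra.
Qed.

Lemma Cn_Dl a b : -1 < a < 1 -> -1 < b < 1 -> Cn (Dl a b).
Proof.
  intros Ha Hb. unfold Dl. apply (Cn_ext (fun y => / (b - a) * (omegat a y - omegat b y))); [intros; unfold Rdiv; ring|].
  apply Cn_scal. apply Cn_minus; apply Cn_omegat; auto.
Qed.

Lemma L2 N (phit : R -> nat -> R -> R) a b j : -1 < a < 1 -> -1 < b < 1 -> b <> a -> (j <= N)%nat ->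
  (forall b, -1 < b < 1 -> forall j, monic_orth_poly (omegat b) j (phit b j)) ->
  I (fun x => (phit b (S N) x - phit a (S N) x) / (b - a) * phit a j x * omegat a x) =
  I (fun x => phit b (S N) x * phit a j x * Dl a b x).
Proof.
  intros Ha Hb Hab Hj Hphit.
  assert (Hba : b - a <> 0) by (apply Rminus_eq_contra; auto).
  assert (Cpb : Cn (phit b (S N))) by (eapply Cn_phi; apply Hphit; auto).
  assert (Cpa : Cn (phit a (S N))) by (eapply Cn_phi; apply Hphit; auto).
  assert (Cj : Cn (phit a j)) by (eapply Cn_phi; apply Hphit; auto).
  assert (Cwa := Cn_omegat a Ha). assert (Cwb := Cn_omegat b Hb).
  rewrite (I_ext _ (fun x => phit b (S N) x * phit a j x * Dl a b x +
      (/ (b - a) * (phit b (S N) x * phit a j x * omegat b x) + (- / (b - a)) * (phit a (S N) x * phit a j x * omegat a x)))).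
  2:{ intros x _. unfold Dl. field. auto. }
  rewrite I_plus, I_plus, !I_scal.
  rewrite (orth_pol (omegat b) (S N) (phit b (S N)) (phit a j)); auto.
  rewrite (orth_pol (omegat a) (S N) (phit a (S N)) (phit a j)); auto. ring.
  1,2: apply (pol_le (S j)); [lia|apply monic_pol; apply Hphit; auto].
  all: assert (CD := Cn_Dl a b Ha Hb); cn.
Qed.

Lemma monic_diff n f g : monic_poly n f -> monic_poly n g -> pol n (fun x => f x - g x).
Proof.
  intros Hf Hg. apply monic_iff in Hf. apply monic_iff in Hg.
  destruct Hf as [p [Hp Ep]]. destruct Hg as [q [Hq Eq]].
  apply (pol_ext n (fun x => p x - q x)). intros; rewrite Ep, Eq; ring. apply pol_minus; auto.
Qed.

Lemma approx N (phit : R -> nat -> R -> R) a : -1 < a < 1 ->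
  (forall b, -1 < b < 1 -> forall j, monic_orth_poly (omegat b) j (phit b j)) ->
  exists Rs, pol (S N) Rs /\
   (forall q, pol (S N) q -> I (fun x => Rs x * q x * omegat a x) = I (fun x => phit a (S N) x * q x * Dw a x)) /\
   exists d1 C, 0 < d1 /\ 0 <= C /\ forall b, 0 < Rabs (b - a) < d1 -> forall x, -1 <= x <= 1 ->
     Rabs ((phit b (S N) x - phit a (S N) x) / (b - a) - Rs x) <= C * Rabs (b - a) /\
     Rabs ((phit b (S N) x - phit a (S N) x) / (b - a)) <= C.
Proof.
  intros Ha Hphit.
  assert (Hphi := Hphit a Ha).
  set (w := omegat a) in *. set (phi := phit a) in *. set (P := phi (S N)).
  assert (Cw : Cn w) by (apply Cn_omegat; auto).
  assert (Pw : wpos w) by (apply wpos_omegat; auto).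
  assert (Cphi : forall j, Cn (phi j)) by (intros; eapply Cn_phi; eauto).
  assert (CP : Cn P) by apply Cphi.
  assert (CDw := Cn_Dw a Ha).
  assert (Hh : forall j, 0 < hh w phi j) by (intros; apply hh_pos; auto).
  set (rs := fun j => I (fun x => P x * phi j x * Dw a x) / hh w phi j).
  set (Rs := fun x => sum_f_R0 (fun j => rs j * phi j x) N).
  exists Rs. split.
  { apply pol_sum. intros k Hk. apply pol_scal. apply (pol_le (S k)); [lia|]. apply monic_pol, Hphi. }
  split.
  { intros q Hq.
    assert (Eq := expand w phi N q Cw Pw Hphi Hq).
    assert (Cq : Cn q) by (eapply Cn_pol; eauto).
    set (cq := fun j => I (fun y => q y * phi j y * w y) / hh w phi j) in Eq.
    rewrite (I_ext (fun x => Rs x * q x * w x) (fun x => sum_f_R0 (fun j => rs j * (q x * phi j x * w x)) N)).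
    2:{ intros x _. unfold Rs. rewrite Rmult_assoc, (Rmult_comm (sum_f_R0 _ N)), scal_sum. apply sum_eq. intros; ring. }
    rewrite (I_ext (fun x => P x * q x * Dw a x) (fun x => sum_f_R0 (fun j => cq j * (P x * phi j x * Dw a x)) N)).
    2:{ intros x _. rewrite Eq. rewrite (Rmult_comm (P x)), Rmult_assoc, (Rmult_comm (sum_f_R0 _ N)), scal_sum.
        apply sum_eq. intros. unfold cq. ring. }
    rewrite !I_sum. apply sum_eq. intros j Hj. rewrite !I_scal. unfold rs, cq.
    field. specialize (Hh j). lra.
    apply Cn_mult; [apply Cn_mult|]; auto. apply Cn_mult; [apply Cn_mult|]; auto.
    intros; apply Cn_scal; apply Cn_mult; [apply Cn_mult|]; auto.
    intros; apply Cn_scal; apply Cn_mult; [apply Cn_mult|]; auto. }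
  destruct (Dl_bounds a Ha) as [K [K2 [HK [HK2 HD]]]].
  destruct (fin_bound N phi) as [Bp [HBp HBp']].
  { intros j Hj. destruct (pol_bound (S j) (phi j)) as [M [_ HM]]. apply monic_pol, Hphi. exists M; auto. }
  destruct (pol_bound (S (S N)) P) as [BP [HBP HBP']]. apply monic_pol, Hphi.
  destruct (fin_max N (fun j => / hh w phi j)) as [H [HH HH']].
  set (NN := INR (S N)). assert (HNN : 0 < NN) by (apply lt_0_INR; lia).
  set (al := NN * H * (2 * (BP * Bp * K))).
  set (be := NN * H * (2 * (Bp * Bp * K))).
  assert (Hal : 0 <= al) by (unfold al; repeat apply Rmult_le_pos; lra).
  assert (Hbe : 0 <= be) by (unfold be; repeat apply Rmult_le_pos; lra).
  set (C3 := H * (2 * (BP * Bp * K2) + 2 * (2 * al * Bp * Bp * K))).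
  assert (HC3 : 0 <= C3) by (unfold C3; apply Rmult_le_pos; auto; apply Rplus_le_le_0_compat; repeat apply Rmult_le_pos; lra).
  exists (Rmin ((1 - Rabs a) / 2) (1 / (2 * be + 1))), (2 * al * Bp + NN * C3 * Bp).
  split. { apply Rmin_pos. assert (Rabs a < 1) by (apply Rabs_def1; lra). lra. apply Rdiv_lt_0_compat; lra. }
  split. { apply Rplus_le_le_0_compat; apply Rmult_le_pos; try apply Rmult_le_pos; lra. }
  intros b Hb x Hx.
  assert (Hb1 : Rabs (b - a) < (1 - Rabs a) / 2) by (eapply Rlt_le_trans; [apply Hb|apply Rmin_l]).
  assert (Hb0 : 0 < Rabs (b - a) < (1 - Rabs a) / 2) by (split; [apply Hb|exact Hb1]).
  assert (Hb2 : Rabs (b - a) < 1 / (2 * be + 1)) by (eapply Rlt_le_trans; [apply Hb|apply Rmin_r]).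
  assert (Hbt : Rabs (b - a) * be <= 1 / 2).
  { apply Rmult_lt_compat_r with (r := 2 * be + 1) in Hb2; [|lra].
    unfold Rdiv in Hb2. rewrite Rmult_1_l, Rinv_l in Hb2 by lra.
    assert (0 <= Rabs (b - a)) by apply Rabs_pos.
    assert (Rabs (b - a) * (2 * be + 1) = 2 * (Rabs (b - a) * be) + Rabs (b - a)) by ring. lra. }
  destruct (near_b a b Ha Hb1) as [Hbin _].
  assert (Hba : b <> a). { intros ->. rewrite Rminus_diag, Rabs_R0 in Hb. lra. }
  assert (Hba' : b - a <> 0) by (apply Rminus_eq_contra; auto).
  set (Pb := phit b (S N)).
  assert (CPb : Cn Pb) by (eapply Cn_phi; apply Hphit; auto).
  set (R := fun y => (Pb y - P y) / (b - a)).
  assert (HR : pol (S N) R).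
  { apply (pol_ext _ (fun y => / (b - a) * (Pb y - P y))); [intros; unfold R, Rdiv; ring|].
    apply pol_scal. apply monic_diff. apply Hphit; auto. apply Hphi. }
  assert (CR : Cn R) by (eapply Cn_pol; eauto).
  assert (CDl : Cn (Dl a b)) by (apply Cn_Dl; auto).
  set (r := fun j => I (fun y => R y * phi j y * w y) / hh w phi j).
  assert (ER : forall y, R y = sum_f_R0 (fun j => r j * phi j y) N) by (intros y; exact (expand w phi N R Cw Pw Hphi HR y)).
  assert (Er : forall j, (j <= N)%nat -> r j * hh w phi j = I (fun y => Pb y * phi j y * Dl a b y)).
  { intros j Hj. unfold r. assert (E : I (fun y => R y * phi j y * w y) = I (fun y => Pb y * phi j y * Dl a b y)) by exact (L2 N phit a b j Ha Hbin Hba Hj Hphit). rewrite E. field. specialize (Hh j); lra. }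
  assert (Split : forall j, I (fun y => Pb y * phi j y * Dl a b y) =
     I (fun y => P y * phi j y * Dl a b y) + (b - a) * I (fun y => R y * phi j y * Dl a b y)).
  { intros j. rewrite <- I_scal, <- I_plus. apply I_ext. intros y _. unfold R. field; auto.
    cn. cn. cn. }
  set (SR := sum_f_R0 (fun j => Rabs (r j)) N).
  assert (HSR : 0 <= SR).
  { unfold SR. apply cond_pos_sum. intros; apply Rabs_pos. }
  assert (BR : forall y, -1 <= y <= 1 -> Rabs (R y) <= SR * Bp).
  { intros y Hy. rewrite ER. apply sum_abs_bound. intros; apply HBp'; auto. }
  assert (B1 : forall j, (j <= N)%nat -> Rabs (I (fun y => P y * phi j y * Dl a b y)) <= 2 * (BP * Bp * K)).
  { intros j Hj. apply I_bound. cn. intros y Hy. apply prod3_bound; auto. apply (proj1 (HD b y Hb0 Hy)). }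
  assert (B2 : forall j, (j <= N)%nat -> Rabs (I (fun y => R y * phi j y * Dl a b y)) <= 2 * (SR * Bp * Bp * K)).
  { intros j Hj. apply I_bound. cn. intros y Hy. apply prod3_bound; auto. apply (proj1 (HD b y Hb0 Hy)). }
  assert (Brj : forall j, (j <= N)%nat -> Rabs (r j) <= H * (2 * (BP * Bp * K) + Rabs (b - a) * (2 * (SR * Bp * Bp * K)))).
  { intros j Hj.
    assert (E : r j = I (fun y => Pb y * phi j y * Dl a b y) * / hh w phi j).
    { rewrite <- Er by auto. field. specialize (Hh j); lra. }
    rewrite E, Split, Rabs_mult, (Rabs_right (/ _)).
    2:{ apply Rle_ge; left; apply Rinv_0_lt_compat; auto. }
    rewrite Rmult_comm. apply Rmult_le_compat. left; apply Rinv_0_lt_compat; auto. apply Rabs_pos.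
    apply HH'; auto.
    eapply Rle_trans. apply Rabs_triang. rewrite Rabs_mult.
    apply Rplus_le_compat. apply B1; auto. apply Rmult_le_compat_l. apply Rabs_pos. apply B2; auto. }
  assert (SRb : SR <= al + Rabs (b - a) * be * SR).
  { apply Rle_trans with (sum_f_R0 (fun _ => H * (2 * (BP * Bp * K) + Rabs (b - a) * (2 * (SR * Bp * Bp * K)))) N).
    apply sum_Rle. intros; apply Brj; auto.
    rewrite sum_cte. fold NN. unfold al, be. right. ring. }
  assert (SR2 : SR <= 2 * al).
  { assert (Rabs (b - a) * be * SR <= 1 / 2 * SR) by (apply Rmult_le_compat_r; auto). lra. }
  split.
  2:{ fold P. fold Pb. fold R. eapply Rle_trans. apply BR; auto.
      assert (SR * Bp <= 2 * al * Bp) by (apply Rmult_le_compat_r; auto).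
      assert (0 <= NN * C3 * Bp) by (apply Rmult_le_pos; [apply Rmult_le_pos|]; lra). lra. }
  fold P. fold Pb. change ((Pb x - P x) / (b - a)) with (R x).
  assert (Dif : forall j, (j <= N)%nat -> Rabs (r j - rs j) <= C3 * Rabs (b - a)).
  { intros j Hj.
    assert (E : r j - rs j = (I (fun y => P y * phi j y * (Dl a b y - Dw a y)) + (b - a) * I (fun y => R y * phi j y * Dl a b y)) * / hh w phi j).
    { unfold rs. replace (r j) with (I (fun y => Pb y * phi j y * Dl a b y) * / hh w phi j).
      2:{ rewrite <- Er by auto. field. specialize (Hh j); lra. }
      rewrite Split. rewrite (I_ext (fun y => P y * phi j y * (Dl a b y - Dw a y))
          (fun y => P y * phi j y * Dl a b y - P y * phi j y * Dw a y)) by (intros; ring).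
      rewrite I_minus. field. specialize (Hh j); lra. cn. cn. }
    rewrite E, Rabs_mult, (Rabs_right (/ _)).
    2:{ apply Rle_ge; left; apply Rinv_0_lt_compat; auto. }
    assert (X1 : Rabs (I (fun y => P y * phi j y * (Dl a b y - Dw a y))) <= 2 * (BP * Bp * (K2 * Rabs (b - a)))).
    { apply I_bound. cn. intros y Hy. apply prod3_bound; auto. apply (proj2 (HD b y Hb0 Hy)). }
    assert (X2 : Rabs ((b - a) * I (fun y => R y * phi j y * Dl a b y)) <= Rabs (b - a) * (2 * (2 * al * Bp * Bp * K))).
    { rewrite Rabs_mult. apply Rmult_le_compat_l. apply Rabs_pos. eapply Rle_trans. apply B2; auto.
      apply Rmult_le_compat_l. lra. repeat apply Rmult_le_compat_r; auto. }
    assert (X3 : / hh w phi j <= H) by (apply HH'; auto).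
    assert (X4 : 0 < / hh w phi j) by (apply Rinv_0_lt_compat; auto).
    assert (X5 : Rabs (I (fun y => P y * phi j y * (Dl a b y - Dw a y)) + (b - a) * I (fun y => R y * phi j y * Dl a b y))
       <= Rabs (b - a) * (2 * (BP * Bp * K2) + 2 * (2 * al * Bp * Bp * K))).
    { eapply Rle_trans. apply Rabs_triang. assert (0 <= Rabs (b - a)) by apply Rabs_pos. lra. }
    unfold C3. rewrite Rmult_comm. 
    replace (H * (2 * (BP * Bp * K2) + 2 * (2 * al * Bp * Bp * K)) * Rabs (b - a)) with
      (H * (Rabs (b - a) * (2 * (BP * Bp * K2) + 2 * (2 * al * Bp * Bp * K)))) by ring.
    apply Rmult_le_compat; auto. left; auto. apply Rabs_pos. }
  assert (ERs : R x - Rs x = sum_f_R0 (fun j => (r j - rs j) * phi j x) N).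
  { rewrite ER. unfold Rs. rewrite <- minus_sum. apply sum_eq. intros; ring. }
  rewrite ERs. eapply Rle_trans. apply (sum_abs_bound N _ (fun j => phi j x) Bp). intros; apply HBp'; auto.
  apply Rle_trans with (NN * C3 * Rabs (b - a) * Bp).
  apply Rmult_le_compat_r; auto.
  apply Rle_trans with (sum_f_R0 (fun _ => C3 * Rabs (b - a)) N). apply sum_Rle. intros; apply Dif; auto.
  rewrite sum_cte. fold NN. right; ring.
  assert (0 <= 2 * al * Bp * Rabs (b - a)) by (repeat apply Rmult_le_pos; try lra; apply Rabs_pos).
  lra.
Qed.

Lemma sign_Rs a N P x0 l Rs : -1 < a < 1 -> monic_orth_poly (omegat a) (S N) P ->
  (forall x, P x = (x - x0) * l x) -> monic_poly N l -> -1 < x0 < 1 -> pol (S N) Rs ->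
  (forall q, pol (S N) q -> I (fun x => Rs x * q x * omegat a x) = I (fun x => P x * q x * Dw a x)) ->
  0 < Rs x0 * l x0.
Proof.
  intros Ha HP EP Hl Hx0 HRs HI.
  set (w := omegat a) in *.
  assert (Cw : Cn w) by (apply Cn_omegat; auto).
  assert (Pw : wpos w) by (apply wpos_omegat; auto).
  assert (Cl : Cn l) by (apply (Cn_pol (S N)); apply monic_pol; auto).
  assert (CP : Cn P) by (apply (Cn_pol (S (S N))); apply monic_pol; apply HP).
  assert (CR : Cn Rs) by (eapply Cn_pol; eauto).
  assert (A1 := Ival w N P x0 l Rs Cw HP EP (monic_pol _ _ Hl) HRs).
  assert (A2 := W_pos w N P x0 l Cw Pw HP EP Hl).
  assert (Hx1 : 0 < 1 + a * x0) by (apply onepos; lra).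
  assert (A3 : 0 < I (fun x => Rs x * l x * w x)).
  { rewrite HI by (apply monic_pol; auto).
    rewrite (I_ext _ (fun x => (5 * x0 / (1 + a * x0)) * (P x * l x * w x) + (5 / (1 + a * x0)) * (P x * P x * w x / (1 + a * x)))).
    2:{ intros x Hx. assert (0 < 1 + a * x) by (apply onepos; auto). unfold w, omegat, Dw. rewrite EP. field. lra. }
    assert (Cinv : Cn (fun x => / (1 + a * x))).
    { intros x Hx. apply (ct_inv (fun y => 1 + a * y)). apply ct_plus. apply ct_const. apply ct_mult. apply ct_const. apply ct_id.
      assert (0 < 1 + a * x) by (apply onepos; auto). lra. }
    rewrite I_plus, !I_scal. rewrite (orth_pol w (S N) P l); auto. 2: apply monic_pol; auto.
    destruct (monic_nonzero (S N) P (proj1 HP)) as [y [Hy HPy]].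
    assert (0 < I (fun x => P x * P x * w x / (1 + a * x))).
    { apply (I_pos _ y). unfold Rdiv; cn.
      intros x Hx. assert (0 < 1 + a * x) by (apply onepos; auto). specialize (Pw x Hx).
      apply Rdiv_le_0_compat; auto. apply Rmult_le_pos; auto. apply Rle_0_sqr. lra. lra.
      assert (0 < 1 + a * y) by (apply onepos; auto; lra). specialize (Pw y ltac:(lra)).
      apply Rdiv_lt_0_compat; auto. apply Rmult_lt_0_compat; auto. apply Rlt_0_sqr; auto. }
    assert (0 < 5 / (1 + a * x0)) by (apply Rdiv_lt_0_compat; lra).
    rewrite Rmult_0_r, Rplus_0_l. apply Rmult_lt_0_compat; auto.
    unfold Rdiv; cn. cn. cn.
    apply Cn_scal. unfold Rdiv; cn. }
  rewrite A1 in A3. set (J := I (fun x => l x * w x)) in *.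
  assert (0 < (Rs x0 * J) * (l x0 * J)) by (apply Rmult_lt_0_compat; auto).
  destruct (Rlt_dec 0 (Rs x0 * l x0)); auto.
  assert (0 <= J * J) by apply Rle_0_sqr.
  assert ((Rs x0 * J) * (l x0 * J) = (Rs x0 * l x0) * (J * J)) by ring.
  assert ((Rs x0 * l x0) * (J * J) <= 0). { apply Rmult_le_0_r; lra. }
  lra.
Qed.

Lemma same_sign p q : Rabs (p - q) < Rabs q -> 0 < p * q.
Proof.
  intros H. destruct (Rlt_dec 0 q).
  - rewrite (Rabs_right q) in H by lra. apply Rabs_def2 in H. apply Rmult_lt_0_compat; lra.
  - destruct (Req_dec q 0) as [->|]. rewrite Rabs_R0 in H. assert (0 <= Rabs (p - 0)) by apply Rabs_pos. lra.
    rewrite (Rabs_left q) in H by lra. apply Rabs_def2 in H.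
    replace (p * q) with ((- p) * (- q)) by ring. apply Rmult_lt_0_compat; lra.
Qed.

Lemma sign_combine x y z t : 0 < x * y -> 0 < z * t -> y * t < 0 -> x * z < 0.
Proof.
  intros H1 H2 H3.
  assert (0 < (x * y) * (z * t)) by (apply Rmult_lt_0_compat; auto).
  assert ((x * y) * (z * t) = (x * z) * (y * t)) by ring.
  destruct (Rlt_dec (x * z) 0); auto.
  assert (0 <= (x * z) * - (y * t)) by (apply Rmult_le_pos; lra). lra.
Qed.

Lemma roots_cont N (phit : R -> nat -> R -> R) (lamN : R -> nat -> R) a d1 C :
  -1 < a < 1 ->
  (forall b, -1 < b < 1 -> forall j, monic_orth_poly (omegat b) j (phit b j)) ->
  (forall b, -1 < b < 1 -> sorted_zeros (phit b (S N)) N (lamN b)) ->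
  0 < d1 -> 0 <= C ->
  (forall b, 0 < Rabs (b - a) < d1 -> forall x, -1 <= x <= 1 -> Rabs (phit b (S N) x - phit a (S N) x) <= C * Rabs (b - a)) ->
  exists g, 0 < g /\ (forall i j, (i <= N)%nat -> (j <= N)%nat -> i <> j -> g <= Rabs (lamN a i - lamN a j)) /\
  exists e0, 0 < e0 /\ e0 <= g / 4 /\ (forall i, (i <= N)%nat -> forall y, Rabs (y - lamN a i) < e0 -> -1 < y < 1) /\
  forall e, 0 < e <= e0 -> exists d, 0 < d /\ forall b, 0 < Rabs (b - a) < d ->
    forall i, (i <= N)%nat -> Rabs (lamN b i - lamN a i) < e.
Proof.
  intros Ha Hphit HlamN Hd1 HC Happ.
  set (lam := lamN a). set (P := phit a (S N)).
  assert (SP := HlamN a Ha). fold lam P in SP.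
  assert (HP : monic_orth_poly (omegat a) (S N) P) by (apply Hphit; auto).
  assert (Hs := proj1 SP).
  destruct (gap_exists lam N Hs) as [g [Hg Hgap]].
  exists g. split; auto. split; auto.
  assert (Ins : forall k, (k <= N)%nat -> -1 < lam k < 1).
  { intros k Hk. destruct (ell_props P N lam k (proj1 HP) SP Hk) as [Hl El].
    apply (root_inside (omegat a) N P (lam k) (ell lam N k)); auto. apply Cn_omegat; auto. apply wpos_omegat; auto. }
  set (m1 := Rmin (lam 0%nat + 1) (1 - lam N)).
  assert (Hm1 : 0 < m1). { unfold m1. assert (I0 := Ins 0%nat ltac:(lia)). assert (IN := Ins N ltac:(lia)). apply Rmin_pos; lra. }
  assert (Hm1a : m1 <= lam 0%nat + 1) by apply Rmin_l.
  assert (Hm1b : m1 <= 1 - lam N) by apply Rmin_r.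
  exists (Rmin (g / 4) (m1 / 2)). split. apply Rmin_pos; lra. split. apply Rmin_l.
  assert (He0 : Rmin (g / 4) (m1 / 2) <= m1 / 2) by apply Rmin_r.
  assert (Range : forall i, (i <= N)%nat -> lam 0%nat <= lam i <= lam N).
  { intros i Hi. split; apply (sorted_le lam N Hs); lia. }
  split.
  { intros i Hi y Hy. apply Rabs_def2 in Hy. specialize (Range i Hi). lra. }
  intros e [He He'].
  assert (Hgg : e <= g / 4) by (eapply Rle_trans; [apply He'|apply Rmin_l]).
  assert (Hem : e <= m1 / 2) by lra.
  assert (Sg : forall i, (i <= N)%nat -> P (lam i - e) * P (lam i + e) < 0).
  { intros i Hi. destruct (ell_props P N lam i (proj1 HP) SP Hi) as [_ El].
    rewrite !El. replace (lam i - e - lam i) with (- e) by ring. replace (lam i + e - lam i) with e by ring.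
    assert (0 < ell lam N i (lam i - e) * ell lam N i (lam i + e)).
    { apply (ell_near lam N i g); auto.
      replace (lam i - e - lam i) with (- e) by ring. rewrite Rabs_Ropp, Rabs_right; lra.
      replace (lam i + e - lam i) with e by ring. rewrite Rabs_right; lra. }
    assert (0 < e * e) by (apply Rmult_lt_0_compat; auto).
    replace (- e * ell lam N i (lam i - e) * (e * ell lam N i (lam i + e))) with
      (- (e * e) * (ell lam N i (lam i - e) * ell lam N i (lam i + e))) by ring.
    assert (0 < (e * e) * (ell lam N i (lam i - e) * ell lam N i (lam i + e))) by (apply Rmult_lt_0_compat; auto).
    lra. }
  destruct (min_exists (S N) (fun i => Rmin (Rabs (P (lam i - e))) (Rabs (P (lam i + e))))) as [m [Hm Hm']].
  { intros i Hi. specialize (Sg i ltac:(lia)). apply Rmin_pos; apply Rabs_pos_lt; intros E; rewrite E in Sg; lra. }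
  exists (Rmin (Rmin d1 ((1 - Rabs a) / 2)) (m / (C + 1))). split.
  { assert (Rabs a < 1) by (apply Rabs_def1; lra). repeat apply Rmin_pos; try lra. apply Rdiv_lt_0_compat; lra. }
  intros b Hb.
  assert (Hbd1 : Rabs (b - a) < d1) by (eapply Rlt_le_trans; [apply Hb|]; eapply Rle_trans; apply Rmin_l).
  assert (Hbd2 : Rabs (b - a) < (1 - Rabs a) / 2) by (eapply Rlt_le_trans; [apply Hb|]; eapply Rle_trans; [apply Rmin_l|apply Rmin_r]).
  assert (Hbd3 : Rabs (b - a) < m / (C + 1)) by (eapply Rlt_le_trans; [apply Hb|apply Rmin_r]).
  destruct (near_b a b Ha Hbd2) as [Hbin _].
  assert (Cm : C * Rabs (b - a) < m).
  { apply Rmult_lt_compat_r with (r := C + 1) in Hbd3; [|lra]. unfold Rdiv in Hbd3.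
    rewrite Rmult_assoc, Rinv_l, Rmult_1_r in Hbd3 by lra. assert (0 <= Rabs (b - a)) by apply Rabs_pos.
    assert (Rabs (b - a) * (C + 1) = C * Rabs (b - a) + Rabs (b - a)) by ring. lra. }
  set (Pb := phit b (S N)).
  assert (HPb : monic_orth_poly (omegat b) (S N) Pb) by (apply Hphit; auto).
  assert (SPb := HlamN b Hbin). fold Pb in SPb.
  assert (Close : forall y, -1 <= y <= 1 -> Rabs (Pb y - P y) < m) by (intros; eapply Rle_lt_trans; [apply Happ; auto; lra|auto]).
  assert (Sgb : forall i, (i <= N)%nat -> Pb (lam i - e) * Pb (lam i + e) < 0).
  { intros i Hi. specialize (Range i Hi). specialize (Hm' i ltac:(lia)). simpl in Hm'.
    apply (sign_combine _ (P (lam i - e)) _ (P (lam i + e))); [| |apply Sg; auto].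
    - apply same_sign. eapply Rlt_le_trans. apply Close; lra. eapply Rle_trans. apply Hm'. apply Rmin_l.
    - apply same_sign. eapply Rlt_le_trans. apply Close; lra. eapply Rle_trans. apply Hm'. apply Rmin_r. }
  assert (Ex : forall i, exists r, ((i <= N)%nat -> lam i - e < r < lam i + e /\ Pb r = 0)).
  { intros i. destruct (Nat.le_gt_cases i N) as [Hi|Hi].
    - destruct (root_between (S (S N)) Pb (lam i - e) (lam i + e)) as [r Hr].
      apply monic_pol, HPb. lra. apply Sgb; auto. exists r; auto.
    - exists 0; intros; lia. }
  set (rho := fun i => proj1_sig (constructive_indefinite_description _ (Ex i))).
  assert (Hrho : forall i, (i <= N)%nat -> lam i - e < rho i < lam i + e /\ Pb (rho i) = 0).
  { intros i Hi. unfold rho. destruct (constructive_indefinite_description _ (Ex i)); simpl; auto. }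
  assert (M : forall i, (i <= N)%nat -> rho i = lamN b i).
  { apply index_match. apply SPb.
    intros i Hi. assert (A := Hrho i ltac:(lia)). assert (B := Hrho (S i) ltac:(lia)).
    assert (G := Hgap (S i) i ltac:(lia) ltac:(lia) ltac:(lia)).
    assert (lam i < lam (S i)) by (apply Hs; auto). rewrite Rabs_right in G by lra. lra.
    intros i Hi. destruct (Hrho i Hi) as [_ Z]. destruct SPb as [_ [_ Hall]].
    destruct (Hall _ Z) as [k [Hk Ek]]. exists k; auto. }
  intros i Hi. rewrite <- M by auto. destruct (Hrho i Hi) as [[A B] _]. apply Rabs_def1; lra.
Qed.

Lemma part1 N (phit : R -> nat -> R -> R) (lamN : R -> nat -> R) a k : -1 < a < 1 ->
  (forall b, -1 < b < 1 -> forall j, monic_orth_poly (omegat b) j (phit b j)) ->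
  (forall b, -1 < b < 1 -> sorted_zeros (phit b (S N)) N (lamN b)) ->
  (k <= N)%nat ->
  exists l, derivable_pt_lim (fun b => lamN b k) a l /\ l < 0.
Proof.
  intros Ha Hphit HlamN Hk.
  destruct (approx N phit a Ha Hphit) as [Rs [HRs [HI [d1 [C [Hd1 [HC Happ]]]]]]].
  set (lam := lamN a). set (P := phit a (S N)).
  assert (SP := HlamN a Ha). fold lam P in SP.
  assert (HP : monic_orth_poly (omegat a) (S N) P) by (apply Hphit; auto).
  destruct (ell_props P N lam k (proj1 HP) SP Hk) as [Hl El].
  set (l := ell lam N k) in *.
  set (x0 := lam k) in *.
  assert (Hx0 : -1 < x0 < 1).
  { apply (root_inside (omegat a) N P x0 l); auto. apply Cn_omegat; auto. apply wpos_omegat; auto. }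
  assert (Sg : 0 < Rs x0 * l x0) by (apply (sign_Rs a N P x0 l Rs); auto).
  assert (Hl0 : l x0 <> 0). { intros E. rewrite E in Sg. lra. }
  assert (Happ2 : forall b, 0 < Rabs (b - a) < d1 -> forall x, -1 <= x <= 1 ->
     Rabs (phit b (S N) x - phit a (S N) x) <= C * Rabs (b - a)).
  { intros b Hb x Hx. destruct (Happ b Hb x Hx) as [_ H2].
    assert (b - a <> 0). { intros E. rewrite E, Rabs_R0 in Hb. lra. }
    replace (phit b (S N) x - phit a (S N) x) with ((b - a) * ((phit b (S N) x - phit a (S N) x) / (b - a))) by (field; auto).
    rewrite Rabs_mult, Rmult_comm. apply Rmult_le_compat_r; auto. apply Rabs_pos. }
  destruct (roots_cont N phit lamN a d1 C Ha Hphit HlamN Hd1 HC Happ2) as [g [Hg [Hgap [e0 [He0 [He0g [Hin Hcont]]]]]]].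
  destruct (pol_lip (S N) Rs x0 HRs) as [L1 [HL1 HL1']].
  destruct (pol_lip (S N) l x0 (monic_pol _ _ Hl)) as [L2 [HL2 HL2']].
  exists (- (Rs x0 / l x0)). split.
  2:{ assert (0 < Rs x0 / l x0); [|lra].
      replace (Rs x0 / l x0) with ((Rs x0 * l x0) / (l x0 * l x0)) by (field; auto).
      apply Rdiv_lt_0_compat; auto. destruct (Rlt_dec 0 (l x0)); [nra|]. assert (l x0 < 0) by lra. nra. }
  intros eps Heps.
  destruct (div_close (Rs x0) (l x0) eps Hl0 Heps) as [eta [Heta [Heta2 Hdc]]].
  set (e := Rmin e0 (Rmin (eta / (2 * (L1 + 1))) (eta / (L2 + 1)))).
  assert (He : 0 < e). { unfold e. repeat apply Rmin_pos; auto; apply Rdiv_lt_0_compat; lra. }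
  assert (He1 : e <= e0) by apply Rmin_l.
  assert (He2 : e <= eta / (2 * (L1 + 1))) by (eapply Rle_trans; [apply Rmin_r|apply Rmin_l]).
  assert (He3 : e <= eta / (L2 + 1)) by (eapply Rle_trans; [apply Rmin_r|apply Rmin_r]).
  destruct (Hcont e (conj He He1)) as [d [Hd Hdd]].
  assert (Ha1 : 0 < (1 - Rabs a) / 2) by (assert (Rabs a < 1) by (apply Rabs_def1; lra); lra).
  set (del := Rmin (Rmin d d1) (Rmin ((1 - Rabs a) / 2) (eta / (2 * (C + 1))))).
  assert (Hdel : 0 < del). { unfold del. repeat apply Rmin_pos; auto. apply Rdiv_lt_0_compat; lra. }
  exists (mkposreal del Hdel). intros h Hh0 Hhd. simpl in Hhd.
  set (b := a + h).
  assert (Hba : b - a = h) by (unfold b; ring).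
  assert (Hbd : 0 < Rabs (b - a)) by (rewrite Hba; apply Rabs_pos_lt; auto).
  assert (Hh1 : Rabs h < d) by (eapply Rlt_le_trans; [apply Hhd|]; unfold del; eapply Rle_trans; apply Rmin_l).
  assert (Hh2 : Rabs h < d1) by (eapply Rlt_le_trans; [apply Hhd|]; unfold del; eapply Rle_trans; [apply Rmin_l|apply Rmin_r]).
  assert (Hh3 : Rabs h < (1 - Rabs a) / 2) by (eapply Rlt_le_trans; [apply Hhd|]; unfold del; eapply Rle_trans; [apply Rmin_r|apply Rmin_l]).
  assert (Hh4 : Rabs h < eta / (2 * (C + 1))) by (eapply Rlt_le_trans; [apply Hhd|]; unfold del; eapply Rle_trans; [apply Rmin_r|apply Rmin_r]).
  rewrite <- Hba in Hh1, Hh2, Hh3, Hh4.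
  destruct (near_b a b Ha Hh3) as [Hbin _].
  set (y := lamN b k).
  assert (Hy : Rabs (y - x0) < e) by (apply Hdd; auto).
  assert (Hyin : -1 < y < 1) by (apply (Hin k Hk); exact (Rlt_le_trans _ _ _ Hy He1)).
  assert (Py : phit b (S N) y = 0) by (apply (HlamN b Hbin); auto).
  assert (Ly : Rabs (l y - l x0) < eta).
  { eapply Rle_lt_trans. apply HL2'; split; lra.
    assert (L2 * Rabs (y - x0) <= L2 * e) by (apply Rmult_le_compat_l; lra).
    assert (L2 * e <= L2 * (eta / (L2 + 1))) by (apply Rmult_le_compat_l; lra).
    assert (L2 * (eta / (L2 + 1)) < eta).
    { assert (E : L2 * (eta / (L2 + 1)) = eta - eta / (L2 + 1)) by (field; lra).
      assert (0 < eta / (L2 + 1)) by (apply Rdiv_lt_0_compat; lra). lra. }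
    lra. }
  assert (Hly : l y <> 0).
  { intros E. rewrite E in Ly. rewrite Rminus_0_l, Rabs_Ropp in Ly. lra. }
  set (Rb := (phit b (S N) y - phit a (S N) y) / (b - a)).
  assert (Ry : Rabs (Rb - Rs x0) < eta).
  { destruct (Happ b (conj Hbd Hh2) y ltac:(split; lra)) as [H1 _]. fold Rb in H1.
    replace (Rb - Rs x0) with ((Rb - Rs y) + (Rs y - Rs x0)) by ring.
    eapply Rle_lt_trans. apply Rabs_triang.
    assert (Rabs (Rs y - Rs x0) <= L1 * e).
    { eapply Rle_trans. apply HL1'; split; lra. apply Rmult_le_compat_l; lra. }
    assert (L1 * e <= L1 * (eta / (2 * (L1 + 1)))) by (apply Rmult_le_compat_l; lra).
    assert (L1 * (eta / (2 * (L1 + 1))) < eta / 2).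
    { assert (E : L1 * (eta / (2 * (L1 + 1))) = eta / 2 - eta / (2 * (L1 + 1))) by (field; lra).
      assert (0 < eta / (2 * (L1 + 1))) by (apply Rdiv_lt_0_compat; lra). lra. }
    assert (C * Rabs (b - a) < eta / 2).
    { apply Rle_lt_trans with (C * (eta / (2 * (C + 1)))). apply Rmult_le_compat_l; lra.
      assert (E : C * (eta / (2 * (C + 1))) = eta / 2 - eta / (2 * (C + 1))) by (field; lra).
      assert (0 < eta / (2 * (C + 1))) by (apply Rdiv_lt_0_compat; lra). lra. }
    lra. }
  assert (Q : (y - lamN a k) / h = - (Rb / l y)).
  { unfold Rb. rewrite Py. change (phit a (S N) y) with (P y). rewrite (El y). rewrite Hba.
    change (lamN a k) with x0. field. split; auto. }
  rewrite Q. replace (- (Rb / l y) - - (Rs x0 / l x0)) with (- (Rb / l y - Rs x0 / l x0)) by ring.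
  rewrite Rabs_Ropp. apply Hdc; auto.
Qed.

Theorem mainTheorem6 (N : nat) (HN : (1 <= N)%nat)
  (phi phit : R -> nat -> R -> R) (lamN lamN1 : R -> nat -> R)
  (Hphi : forall a, -1 < a < 1 -> forall k, monic_orth_poly (omega a) k (phi a k))
  (Hphit : forall a, -1 < a < 1 -> forall k, monic_orth_poly (omegat a) k (phit a k))
  (HlamN : forall a, -1 < a < 1 -> sorted_zeros (phit a (S N)) N (lamN a))
  (HlamN1 : forall a, -1 < a < 1 -> sorted_zeros (phit a N) (N - 1) (lamN1 a)) :
  (* (1) strict decrease in alpha *)
  (forall k : nat, (k <= N)%nat -> forall a, -1 < a < 1 ->
     exists l : R, derivable_pt_lim (fun b => lamN b k) a l /\ l < 0) /\
  (* (2) interlacing *)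
  (forall a, -1 < a < 1 -> forall k : nat, (k <= N - 1)%nat ->
     lamN a k < lamN1 a k < lamN a (S k)) /\
  (* (3) the ratio int mu omega / int omega lies strictly inside *)
  (forall a, -1 < a < 1 -> forall A B : R,
     RInt_eq (fun mu => mu * omega a mu) (-1) 1 A ->
     RInt_eq (fun mu => omega a mu) (-1) 1 B ->
     lamN a 0%nat < A / B < lamN a N) /\
  (* ... in particular for the moments of the ansatz *)
  (forall a, -1 < a < 1 -> forall f : nat -> R, f 0%nat <> 0 -> f 1%nat = 0 ->
     forall E0 E1 : R,
     RInt_eq (fun mu => sum_f_R0 (fun i => f i * omega a mu * phi a i mu) N) (-1) 1 E0 ->
     RInt_eq (fun mu => mu * sum_f_R0 (fun i => f i * omega a mu * phi a i mu) N) (-1) 1 E1 ->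
     lamN a 0%nat < E1 / E0 < lamN a N).
Proof.
  split; [|split; [|split]].
  - intros k Hk a Ha. apply (part1 N phit lamN a k Ha Hphit HlamN Hk).
  - intros a Ha k Hk.
    apply (interlace (omegat a) N (phit a (S N)) (phit a N) (lamN a) (lamN1 a) HN
      (Cn_omegat a Ha) (wpos_omegat a Ha) (Hphit a Ha (S N)) (Hphit a Ha N) (HlamN a Ha) (HlamN1 a Ha) k Hk).
  - intros a Ha A B HA HB.
    exact (proj2 (part3 a N (phit a (S N)) (lamN a) A B HN Ha (Hphit a Ha (S N)) (HlamN a Ha) HA HB)).
  - intros a Ha f Hf0 Hf1 E0 E1 H0 H1.
    destruct (part4 a N (phi a) f E0 E1 Ha (Hphi a Ha) Hf0 Hf1 H0 H1) as [-> ->].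
    assert (CA : Cn (fun mu => mu * omega a mu)) by (apply Cn_mult; [apply Cn_id|apply Cn_omega; auto]).
    assert (CB : Cn (omega a)) by (apply Cn_omega; auto).
    destruct (part3 a N (phit a (S N)) (lamN a) (I (fun mu => mu * omega a mu)) (I (omega a)) HN Ha
      (Hphit a Ha (S N)) (HlamN a Ha) (RInt_eq_I _ CA) (RInt_eq_I _ CB)) as [Bp Hr].
    replace (f 0%nat * I (fun mu => mu * omega a mu) / (f 0%nat * I (omega a)))
      with (I (fun mu => mu * omega a mu) / I (omega a)) by (field; split; lra).
    exact Hr.
Qed.
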